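(* There exist absolute constants $c_1,c_2,c_3>0$ such that for every integer $n\ge 1$, every real $m\ge n$, and all distributions $p,q$ over $[n]$, with probability at least $9/10$ over the random variables $\widehat f_1,\dots,\widehat f_n$ the following bounds hold simultaneously: \[ c_1\min\Big(\frac{m^{3/2}\|p-q\|_1}{n^{1/2}}, \frac{m^2\|p-q\|_1^2}{n}\Big) \le \mathbb{E}\big[ Z\mid \widehat f_1,\dots,\widehat f_n \big] \le c_2\frac{m^{3/2}\|p-q\|_1}{n^{1/2}}, \qquad \operatorname{Var}\big[ Z \mid \widehat f_1,\dots,\widehat f_n \big] \le c_3\frac{m^2}{n}. \]
   Context: Let $p,q$ be distributions over $[n]$ and $m>0$. Let $\tilde X_i, X_i\sim\mathrm{Poi}(mp_i)$ and $\tilde Y_i,Y_i\sim \mathrm{Poi}(mq_i)$ ($i\in[n]$), all mutually independent (these are the symbol counts in two independent sets of $\mathrm{Poi}(m)$ samples from each of $p$ and $q$). For $m\ge n$ define $f_i=\max\{\sqrt{mn}\,|p_i-q_i|,\ n(p_i+q_i),\ 1\}$ and $\widehat f_i=\max\Big\{\frac{|\tilde X_i-\tilde Y_i|}{\sqrt{m/n}},\ \frac{\tilde X_i+\tilde Y_i}{m/n},\ 1\Big\}$; for $m<n$ define $f_i=\max\{m(p_i+q_i),1\}$ and $\widehat f_i=\max\{\tilde X_i+\tilde Y_i,1\}$. Let $Z_i=(X_i-Y_i)^2-X_i-Y_i$ and $Z=\sum_{i=1}^n Z_i/\widehat f_i$. $\|p-q\|_1=\sum_i|p_i-q_i|$.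 *)

(* Defs.v *)
From Stdlib Require Import Reals Lra Factorial.
From Coquelicot Require Import Coquelicot.
Open Scope R_scope.

Fixpoint sumR (n : nat) (f : nat -> R) : R :=
  match n with O => 0 | S k => sumR k f + f k end.

Definition pois (lam : R) (k : nat) : R := exp (- lam) * lam ^ k / INR (Factorial.fact k).

(* p is a probability distribution over [n] = {0,..,n-1} *)
Definition is_distr (n : nat) (p : nat -> R) : Prop :=
  (forall i, (i < n)%nat -> 0 <= p i) /\ sumR n p = 1.

Definition l1dist (n : nat) (p q : nat -> R) : R := sumR n (fun i => Rabs (p i - q i)).

Definition upd (X : nat -> nat) (k x : nat) : nat -> nat :=
  fun j => if Nat.eqb j k then x else X j.

(* Expectation of g(X,Y) where X_i ~ Poi(a i), Y_i ~ Poi(b i), i < k,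
   all mutually independent (iterated series over the product pmf). *)
Fixpoint ExpN (a b : nat -> R) (k : nat)
  (g : (nat -> nat) -> (nat -> nat) -> R) : R :=
  match k with
  | O => g (fun _ => O) (fun _ => O)
  | S k' => Series (fun x => Series (fun y =>
        pois (a k') x * pois (b k') y *
        ExpN a b k' (fun X Y => g (upd X k' x) (upd Y k' y))))
  end.

(* f_hat_i computed from the counts tX, tY of the first sample sets *)
Definition fhat (n : nat) (m : R) (tX tY : nat -> nat) (i : nat) : R :=
  if Rle_dec (INR n) m then
    Rmax (Rmax (Rabs (INR (tX i) - INR (tY i)) / sqrt (m / INR n))
               ((INR (tX i) + INR (tY i)) / (m / INR n))) 1
  else Rmax (INR (tX i) + INR (tY i)) 1.

Definition Zi (X Y : nat -> nat) (i : nat) : R :=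
  (INR (X i) - INR (Y i)) ^ 2 - INR (X i) - INR (Y i).

Definition Zstat (n : nat) (m : R) (tX tY X Y : nat -> nat) : R :=
  sumR n (fun i => Zi X Y i / fhat n m tX tY i).

(* E[Z | fhat] and Var[Z | fhat]: since (X,Y) is independent of (tX,tY),
   conditioning on fhat amounts to integrating over (X,Y) with fhat fixed. *)
Definition condE (n : nat) (m : R) (p q : nat -> R) (tX tY : nat -> nat) : R :=
  ExpN (fun i => m * p i) (fun i => m * q i) n (fun X Y => Zstat n m tX tY X Y).

Definition condVar (n : nat) (m : R) (p q : nat -> R) (tX tY : nat -> nat) : R :=
  ExpN (fun i => m * p i) (fun i => m * q i) n
    (fun X Y => (Zstat n m tX tY X Y - condE n m p q tX tY) ^ 2).

(* the good event, as a 0/1 indicator of the first sample counts *)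
Definition good_ind (c1 c2 c3 : R) (n : nat) (m : R) (p q : nat -> R)
  (tX tY : nat -> nat) : R :=
  let d := l1dist n p q in
  let E := condE n m p q tX tY in
  let V := condVar n m p q tX tY in
  if Rle_dec (c1 * Rmin (m * sqrt m * d / sqrt (INR n)) (m ^ 2 * d ^ 2 / INR n)) E then
  if Rle_dec E (c2 * (m * sqrt m * d / sqrt (INR n))) then
  if Rle_dec V (c3 * (m ^ 2 / INR n)) then 1 else 0 else 0 else 0.

(* Main.v *)
Require Import Defs.
From Stdlib Require Import Reals Lra Lia Psatz FunctionalExtensionality.
From Coquelicot Require Import Coquelicot.
Open Scope R_scope.

Lemma exs_plus (a b : nat -> R) : ex_series a -> ex_series b -> ex_series (fun n => a n + b n).
Proof. intros; apply (ex_series_plus a b); auto. Qed.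
Lemma exs_scal (c : R) (a : nat -> R) : ex_series a -> ex_series (fun n => c * a n).
Proof. intros; apply (ex_series_scal_l c a); auto. Qed.
Lemma exs_ext (a b : nat -> R) : (forall n, a n = b n) -> ex_series a -> ex_series b.
Proof. intros; eapply ex_series_ext; eauto. Qed.
Lemma exs_le (a b : nat -> R) : (forall n, Rabs (a n) <= b n) -> ex_series b -> ex_series a.
Proof. intros H Hb; apply (ex_series_le a b); auto. Qed.

Lemma Series_nonneg (a : nat -> R) : (forall n, 0 <= a n) -> 0 <= Series a.
Proof.
  intros H. unfold Series.
  assert (Hl : Rbar_le (Lim_seq (fun _ => 0)) (Lim_seq (sum_n a))).
  { apply Lim_seq_le_loc. exists O. intros n _. rewrite sum_n_Reals.
    induction n; simpl; [apply H|]. specialize (H (S n)); lra. }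
  rewrite Lim_seq_const in Hl.
  destruct (Lim_seq (sum_n a)); simpl in *; lra.
Qed.

Lemma pois_nonneg l k : 0 <= l -> 0 <= pois l k.
Proof.
  intros; unfold pois. apply Rmult_le_pos; [apply Rmult_le_pos|].
  - left; apply exp_pos.
  - apply pow_le; auto.
  - left; apply Rinv_0_lt_compat, INR_fact_lt_0.
Qed.

Lemma pois_is_series l : is_series (pois l) 1.
Proof.
  pose proof (is_exp_Reals l) as H. unfold is_pseries in H.
  apply (is_series_scal_l (exp (- l))) in H.
  replace 1 with (scal (exp (-l)) (exp l)).
  2:{ unfold scal; simpl; unfold mult; simpl. rewrite <- exp_plus.
      replace (-l + l) with 0 by ring. apply exp_0. }
  eapply is_series_ext; [|exact H].
  intros n; simpl. unfold scal; simpl; unfold mult; simpl. unfold pois.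
  rewrite pow_n_pow. field. apply INR_fact_neq_0.
Qed.

Lemma pois_ex l : ex_series (pois l).
Proof. eexists; apply pois_is_series. Qed.
Lemma pois_Series l : Series (pois l) = 1.
Proof. apply is_series_unique, pois_is_series. Qed.

Lemma pois_shift l k : pois l (S k) * INR (S k) = l * pois l k.
Proof.
  unfold pois. rewrite fact_simpl, mult_INR. simpl pow.
  field. split; [apply INR_fact_neq_0|]. apply not_0_INR; lia.
Qed.

Definition Ex1 (l : R) (f : nat -> R) : R := Series (fun k => pois l k * f k).
Definition Xs1 (l : R) (f : nat -> R) : Prop := ex_series (fun k => pois l k * f k).

Lemma E1_lin l c f g : Xs1 l f -> Xs1 l g ->
  Xs1 l (fun k => c * f k + g k) /\ Ex1 l (fun k => c * f k + g k) = c * Ex1 l f + Ex1 l g.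
Proof.
  unfold Xs1, Ex1; intros Hf Hg. split.
  - eapply exs_ext; [|apply exs_plus; [apply (exs_scal c _ Hf)|apply Hg]].
    intros; simpl; ring.
  - rewrite <- Series_scal_l, <- Series_plus; [|apply (exs_scal c _ Hf)|apply Hg].
    apply Series_ext; intros; ring.
Qed.

Lemma E1_ext l f g : (forall k, f k = g k) -> Ex1 l f = Ex1 l g.
Proof. intros H; unfold Ex1; apply Series_ext; intros; rewrite H; auto. Qed.
Lemma X1_ext l f g : (forall k, f k = g k) -> Xs1 l f -> Xs1 l g.
Proof. intros H; unfold Xs1; apply exs_ext; intros; rewrite H; auto. Qed.

Lemma E1_shift l f : Xs1 l (fun k => f (S k)) ->
  Xs1 l (fun k => INR k * f k) /\ Ex1 l (fun k => INR k * f k) = l * Ex1 l (fun k => f (S k)).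
Proof.
  unfold Xs1, Ex1; intros H.
  assert (HS : forall k, pois l (S k) * (INR (S k) * f (S k)) = l * (pois l k * f (S k))).
  { intros k. rewrite <- Rmult_assoc, pois_shift. ring. }
  assert (Hx : ex_series (fun k => pois l k * (INR k * f k))).
  { apply ex_series_incr_1. eapply exs_ext; [|apply (exs_scal l _ H)].
    intros k; simpl; rewrite HS; auto. }
  split; auto.
  rewrite Series_incr_1; auto. simpl INR at 1. rewrite <- Series_scal_l.
  rewrite Rmult_0_l, Rmult_0_r, Rplus_0_l. apply Series_ext; intros k. apply HS.
Qed.

Definition mom (l : R) (j : nat) : R :=
  match j with O => 1 | 1 => l | 2 => l^2 + l | 3 => l^3 + 3*l^2 + l
  | _ => l^4 + 6*l^3 + 7*l^2 + l end.

Lemma mom_ok l j : (j <= 4)%nat ->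
  Xs1 l (fun k => INR k ^ j) /\ Ex1 l (fun k => INR k ^ j) = mom l j.
Proof.
  assert (H0 : Xs1 l (fun k => INR k ^ 0) /\ Ex1 l (fun k => INR k ^ 0) = 1).
  { unfold Xs1, Ex1; simpl. split.
    - apply (exs_ext (pois l)); [intros; simpl; ring|apply pois_ex].
    - transitivity (Series (pois l)); [apply Series_ext; intros; ring|apply pois_Series]. }
  assert (H1 : Xs1 l (fun k => INR k ^ 1) /\ Ex1 l (fun k => INR k ^ 1) = l).
  { destruct (E1_shift l (fun k => INR k ^ 0)) as [A B]; [apply H0|].
    split. eapply X1_ext; [|exact A]; intros; simpl; ring.
    rewrite (E1_ext l _ (fun k => INR k * INR k ^ 0)) by (intros; simpl; ring).
    rewrite B. destruct H0 as [_ H0]. rewrite (E1_ext l _ (fun k => INR k ^ 0)) by (intros; simpl; ring).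
    rewrite H0; ring. }
  assert (H2 : Xs1 l (fun k => INR k ^ 2) /\ Ex1 l (fun k => INR k ^ 2) = l^2 + l).
  { destruct H0 as [X0 E0], H1 as [Xs1' Ex1'].
    destruct (E1_lin l 1 (fun k => INR k ^ 1) (fun k => INR k ^ 0) Xs1' X0) as [Xa Ea].
    destruct (E1_shift l (fun k => INR k ^ 1)) as [A B].
    { eapply X1_ext; [|exact Xa]; intros; rewrite S_INR; simpl; ring. }
    split. eapply X1_ext; [|exact A]; intros; simpl; ring.
    rewrite (E1_ext l _ (fun k => INR k * INR k ^ 1)) by (intros; simpl; ring).
    rewrite B, (E1_ext l _ (fun k => 1 * INR k ^ 1 + INR k ^ 0)) by (intros; rewrite S_INR; simpl; ring).
    rewrite Ea, E0, Ex1'; ring. }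
  assert (H3 : Xs1 l (fun k => INR k ^ 3) /\ Ex1 l (fun k => INR k ^ 3) = l^3 + 3*l^2 + l).
  { destruct H0 as [X0 E0], H1 as [Xs1' Ex1'], H2 as [X2 E2].
    destruct (E1_lin l 2 (fun k => INR k ^ 1) (fun k => INR k ^ 0) Xs1' X0) as [Xa Ea].
    destruct (E1_lin l 1 (fun k => INR k ^ 2) _ X2 Xa) as [Xb Eb].
    destruct (E1_shift l (fun k => INR k ^ 2)) as [A B].
    { eapply X1_ext; [|exact Xb]; intros; rewrite S_INR; simpl; ring. }
    split. eapply X1_ext; [|exact A]; intros; simpl; ring.
    rewrite (E1_ext l _ (fun k => INR k * INR k ^ 2)) by (intros; simpl; ring).
    rewrite B, (E1_ext l _ (fun k => 1 * INR k ^ 2 + (2 * INR k ^ 1 + INR k ^ 0))) by (intros; rewrite S_INR; simpl; ring).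
    rewrite Eb, Ea, E0, Ex1', E2; ring. }
  assert (H4 : Xs1 l (fun k => INR k ^ 4) /\ Ex1 l (fun k => INR k ^ 4) = l^4 + 6*l^3 + 7*l^2 + l).
  { destruct H0 as [X0 E0], H1 as [Xs1' Ex1'], H2 as [X2 E2], H3 as [X3 E3].
    destruct (E1_lin l 3 (fun k => INR k ^ 1) (fun k => INR k ^ 0) Xs1' X0) as [Xa Ea].
    destruct (E1_lin l 3 (fun k => INR k ^ 2) _ X2 Xa) as [Xb Eb].
    destruct (E1_lin l 1 (fun k => INR k ^ 3) _ X3 Xb) as [Xc Ec].
    destruct (E1_shift l (fun k => INR k ^ 3)) as [A B].
    { eapply X1_ext; [|exact Xc]; intros; rewrite S_INR; simpl; ring. }
    split. eapply X1_ext; [|exact A]; intros; simpl; ring.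
    rewrite (E1_ext l _ (fun k => INR k * INR k ^ 3)) by (intros; simpl; ring).
    rewrite B, (E1_ext l _ (fun k => 1 * INR k ^ 3 + (3 * INR k ^ 2 + (3 * INR k ^ 1 + INR k ^ 0)))) by (intros; rewrite S_INR; simpl; ring).
    rewrite Ec, Eb, Ea, E0, Ex1', E2, E3; ring. }
  intros Hj. destruct j as [|[|[|[|[|j]]]]]; simpl mom; auto.
  lia.
Qed.

Definition P4 (c0 c1 c2 c3 c4 x : R) := c0 + c1*x + c2*x^2 + c3*x^3 + c4*x^4.

Lemma P4_ok l c0 c1 c2 c3 c4 :
  Xs1 l (fun k => P4 c0 c1 c2 c3 c4 (INR k)) /\
  Ex1 l (fun k => P4 c0 c1 c2 c3 c4 (INR k)) =
    c0 + c1 * l + c2 * (l^2 + l) + c3 * (l^3 + 3*l^2 + l) + c4 * (l^4 + 6*l^3 + 7*l^2 + l).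
Proof.
  destruct (mom_ok l 0) as [X0 E0]; [lia|].
  destruct (mom_ok l 1) as [Xs1' Ex1']; [lia|].
  destruct (mom_ok l 2) as [X2 E2]; [lia|].
  destruct (mom_ok l 3) as [X3 E3]; [lia|].
  destruct (mom_ok l 4) as [X4 E4]; [lia|].
  simpl mom in *.
  destruct (E1_lin l c0 _ (fun k => 0 * INR k ^ 0) X0) as [Xa Ea].
  { unfold Xs1. apply (exs_ext (fun k => 0 * (pois l k * INR k ^ 0))); [intros; ring|apply exs_scal; exact X0]. }
  destruct (E1_lin l c1 _ _ Xs1' Xa) as [Xb Eb].
  destruct (E1_lin l c2 _ _ X2 Xb) as [Xc Ec].
  destruct (E1_lin l c3 _ _ X3 Xc) as [Xd Ed].
  destruct (E1_lin l c4 _ _ X4 Xd) as [Xe Ee].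
  assert (Hz : Ex1 l (fun k => 0 * INR k ^ 0) = 0).
  { unfold Ex1. transitivity (0 * Series (pois l)); [|ring].
    rewrite <- Series_scal_l. apply Series_ext; intros; ring. }
  split.
  - eapply X1_ext; [|exact Xe]; intros; unfold P4; simpl; ring.
  - rewrite (E1_ext l _ (fun k => c4 * INR k ^ 4 + (c3 * INR k ^ 3 + (c2 * INR k ^ 2 + (c1 * INR k ^ 1 + (c0 * INR k ^ 0 + 0 * INR k ^ 0)))))) by (intros; unfold P4; simpl; ring).
    rewrite Ee, Ed, Ec, Eb, Ea, Hz, E0, Ex1', E2, E3, E4; ring.
Qed.

Definition FnN := (nat -> nat) -> (nat -> nat) -> R.
Definition sub (g : FnN) (k x y : nat) : FnN := fun X Y => g (upd X k x) (upd Y k y).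

Section ExpTheory.
Variables a b : nat -> R.

Definition Pr (k x y : nat) := pois (a k) x * pois (b k) y.

Lemma ExpN_S k g : ExpN a b (S k) g =
  Series (fun x => Series (fun y => Pr k x y * ExpN a b k (sub g k x y))).
Proof. reflexivity. Qed.

Fixpoint IntN (k : nat) (g : FnN) : Prop :=
  match k with
  | O => True
  | S k' => (forall x y, IntN k' (sub g k' x y)) /\
      (forall x, ex_series (fun y => Pr k' x y * ExpN a b k' (fun X Y => Rabs (sub g k' x y X Y)))) /\
      ex_series (fun x => Series (fun y => Pr k' x y * ExpN a b k' (fun X Y => Rabs (sub g k' x y X Y))))
  end.

Definition Hpos (k : nat) := forall i, (i < k)%nat -> 0 <= a i /\ 0 <= b i.

Lemma Hpos_S k : Hpos (S k) -> Hpos k.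
Proof. intros H i Hi; apply H; lia. Qed.

Lemma Pr_nonneg k x y : Hpos (S k) -> 0 <= Pr k x y.
Proof. intros H; destruct (H k) as [H1 H2]; [lia|]. unfold Pr.
  apply Rmult_le_pos; apply pois_nonneg; auto. Qed.

Lemma ExpN_ext k : forall g h : FnN, (forall X Y, g X Y = h X Y) -> ExpN a b k g = ExpN a b k h.
Proof.
  induction k; intros g h H; simpl; auto.
  apply Series_ext; intros x; apply Series_ext; intros y. f_equal. apply IHk.
  intros; apply H.
Qed.

Lemma Int_ext k : forall g h : FnN, (forall X Y, g X Y = h X Y) -> IntN k g -> IntN k h.
Proof.
  induction k; intros g h H; simpl; auto.
  intros [H1 [H2 H3]]. split; [|split].
  - intros x y; apply (IHk (sub g k x y)); auto. intros; unfold sub; apply H.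
  - intros x; eapply exs_ext; [|apply (H2 x)]. intros y; simpl.
    f_equal. apply ExpN_ext; intros; unfold sub; rewrite H; auto.
  - eapply exs_ext; [|apply H3]. intros x; simpl. apply Series_ext; intros y.
    f_equal. apply ExpN_ext; intros; unfold sub; rewrite H; auto.
Qed.

Lemma ExpN_nonneg k : Hpos k -> forall g : FnN, (forall X Y, 0 <= g X Y) -> 0 <= ExpN a b k g.
Proof.
  induction k; intros Hp g H; simpl; auto.
  apply Series_nonneg; intros x; apply Series_nonneg; intros y.
  apply Rmult_le_pos; [apply (Pr_nonneg k x y Hp)|].
  apply IHk; [apply Hpos_S; auto|]. intros; apply H.
Qed.

Lemma ExpN_scal k : forall (c : R) (g : FnN), ExpN a b k (fun X Y => c * g X Y) = c * ExpN a b k g.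
Proof.
  induction k; intros c g; simpl; auto.
  rewrite <- Series_scal_l. apply Series_ext; intros x.
  rewrite <- Series_scal_l. apply Series_ext; intros y.
  rewrite (IHk c). ring.
Qed.

Lemma ExpN_const k : forall c : R, ExpN a b k (fun _ _ => c) = c.
Proof.
  induction k; intros c; simpl; auto.
  transitivity (Series (fun x => pois (a k) x * c)).
  - apply Series_ext; intros x. rewrite IHk.
    transitivity (Series (fun y => (pois (a k) x * c) * pois (b k) y)).
    + apply Series_ext; intros; ring.
    + rewrite Series_scal_l, pois_Series; ring.
  - rewrite Series_scal_r, pois_Series; ring.
Qed.

Lemma Int_const k : forall c : R, IntN k (fun _ _ => c).
Proof.
  induction k; intros c; simpl; auto.
  split; [|split].
  - intros; exact (IHk c).
  - intros x. unfold sub. eapply exs_ext; [|apply (exs_scal (pois (a k) x * Rabs c) _ (pois_ex (b k)))].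
    intros y; simpl. rewrite ExpN_const. unfold Pr; ring.
  - eapply exs_ext; [|apply (exs_scal (Rabs c) _ (pois_ex (a k)))].
    intros x; simpl. unfold sub. symmetry. transitivity (pois (a k) x * Rabs c * Series (pois (b k))).
    + rewrite <- Series_scal_l. apply Series_ext; intros y. rewrite ExpN_const. unfold Pr; ring.
    + rewrite pois_Series; ring.
Qed.

Lemma ExpN_abs_scal_sub k k' x y c (g : FnN) :
  ExpN a b k (fun X Y => Rabs (sub (fun X Y => c * g X Y) k' x y X Y)) =
  Rabs c * ExpN a b k (fun X Y => Rabs (sub g k' x y X Y)).
Proof.
  rewrite <- ExpN_scal. apply ExpN_ext; intros; unfold sub; apply Rabs_mult.
Qed.

Lemma Int_scal k : forall (c : R) (g : FnN), IntN k g -> IntN k (fun X Y => c * g X Y).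
Proof.
  induction k; intros c g; auto.
  intros [H1 [H2 H3]]. split; [|split].
  - intros x y. apply (IHk c (sub g k x y)). auto.
  - intros x. eapply exs_ext; [|apply (exs_scal (Rabs c) _ (H2 x))]. intros y; cbv beta.
    rewrite ExpN_abs_scal_sub. ring.
  - eapply exs_ext; [|apply (exs_scal (Rabs c) _ H3)]. intros x; cbv beta.
    rewrite <- Series_scal_l. apply Series_ext; intros y.
    rewrite ExpN_abs_scal_sub. ring.
Qed.

Lemma Int_abs k : forall g : FnN, IntN k g -> IntN k (fun X Y => Rabs (g X Y)).
Proof.
  induction k; intros g; simpl; auto.
  intros [H1 [H2 H3]]. split; [|split].
  - intros x y. apply (IHk (sub g k x y)); auto.
  - intros x. eapply exs_ext; [|apply (H2 x)]. intros y; simpl. f_equal.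
    apply ExpN_ext; intros; unfold sub; rewrite Rabs_Rabsolu; auto.
  - eapply exs_ext; [|apply H3]. intros x; simpl. apply Series_ext; intros y. f_equal.
    apply ExpN_ext; intros; unfold sub; rewrite Rabs_Rabsolu; auto.
Qed.

Definition Add_at k := forall g h : FnN, IntN k g -> IntN k h ->
  IntN k (fun X Y => g X Y + h X Y) /\ ExpN a b k (fun X Y => g X Y + h X Y) = ExpN a b k g + ExpN a b k h.

Lemma mono_of_add k : Hpos k -> Add_at k -> forall g h : FnN, IntN k g -> IntN k h ->
  (forall X Y, g X Y <= h X Y) -> ExpN a b k g <= ExpN a b k h.
Proof.
  intros Hp Ha g h Hg Hh Hle.
  destruct (Ha g (fun X Y => -1 * g X Y + h X Y) Hg) as [_ E].
  { apply (Ha _ h (Int_scal k (-1) g Hg) Hh). }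
  destruct (Ha _ h (Int_scal k (-1) g Hg) Hh) as [_ E2].
  rewrite ExpN_scal in E2.
  rewrite (ExpN_ext k (fun X Y => g X Y + (-1 * g X Y + h X Y)) h) in E by (intros; ring).
  assert (0 <= ExpN a b k (fun X Y => -1 * g X Y + h X Y)).
  { apply ExpN_nonneg; auto. intros; specialize (Hle X Y); lra. }
  lra.
Qed.

Lemma abs_of_add k : Hpos k -> Add_at k -> forall g : FnN, IntN k g ->
  Rabs (ExpN a b k g) <= ExpN a b k (fun X Y => Rabs (g X Y)).
Proof.
  intros Hp Ha g Hg. pose proof (Int_abs k g Hg) as Hga.
  apply Rabs_le; split.
  - pose proof (mono_of_add k Hp Ha (fun X Y => -1 * Rabs (g X Y)) g (Int_scal k (-1) _ Hga) Hg) as M.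
    rewrite ExpN_scal in M. assert (HH : forall X Y : nat -> nat, -1 * Rabs (g X Y) <= g X Y).
    { intros X Y. pose proof (Rle_abs (- g X Y)). rewrite Rabs_Ropp in H. lra. }
    specialize (M HH). lra.
  - apply (mono_of_add k Hp Ha); auto. intros; apply Rle_abs.
Qed.

Lemma lvl_ex k : Hpos (S k) -> (forall g, IntN k g -> Rabs (ExpN a b k g) <= ExpN a b k (fun X Y => Rabs (g X Y))) ->
  forall g, IntN (S k) g ->
  (forall x, ex_series (fun y => Pr k x y * ExpN a b k (sub g k x y))) /\ ex_series (fun x => Series (fun y => Pr k x y * ExpN a b k (sub g k x y))) /\ (forall x, Rabs (Series (fun y => Pr k x y * ExpN a b k (sub g k x y))) <=
     Series (fun y => Pr k x y * ExpN a b k (fun X Y => Rabs (sub g k x y X Y)))).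
Proof.
  intros Hp Habs g [G1 [G2 G3]].
  assert (B : forall x y, Rabs (Pr k x y * ExpN a b k (sub g k x y)) <=
     Pr k x y * ExpN a b k (fun X Y => Rabs (sub g k x y X Y))).
  { intros x y. rewrite Rabs_mult, (Rabs_pos_eq (Pr k x y)) by (apply Pr_nonneg; auto).
    apply Rmult_le_compat_l; [apply Pr_nonneg; auto|]. apply Habs; auto. }
  assert (C : forall x, Rabs (Series (fun y => Pr k x y * ExpN a b k (sub g k x y))) <=
     Series (fun y => Pr k x y * ExpN a b k (fun X Y => Rabs (sub g k x y X Y)))).
  { intros x. eapply Rle_trans; [apply Series_Rabs|].
    - apply (exs_le _ _ (fun y => Rle_trans _ _ _ (Req_le _ _ (Rabs_Rabsolu _)) (B x y)) (G2 x)).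
    - apply Series_le; [|apply G2]. intros y; split; [apply Rabs_pos| apply B]. }
  split; [|split]; auto.
  - intros x. apply (exs_le _ _ (B x) (G2 x)).
  - apply (exs_le _ _ C G3).
Qed.

Lemma add_all k : Hpos k -> Add_at k.
Proof.
  induction k; intros Hp.
  - intros g h _ _. split; simpl; auto.
  - pose proof (Hpos_S k Hp) as Hk. specialize (IHk Hk).
    pose proof (mono_of_add k Hk IHk) as Mono.
    pose proof (abs_of_add k Hk IHk) as Absle.
    intros g h Hg Hh.
    destruct (lvl_ex k Hp Absle g Hg) as [Ga [Gb _]].
    destruct (lvl_ex k Hp Absle h Hh) as [Ha [Hb _]].
    destruct Hg as [G1 [G2 G3]]. destruct Hh as [H1 [H2 H3]].
    assert (Isub : forall x y, IntN k (sub (fun X Y => g X Y + h X Y) k x y)).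
    { intros x y. apply (proj1 (IHk _ _ (G1 x y) (H1 x y))). }
    assert (Kb : forall x y, ExpN a b k (fun X Y => Rabs (sub (fun X Y => g X Y + h X Y) k x y X Y)) <=
       ExpN a b k (fun X Y => Rabs (sub g k x y X Y)) + ExpN a b k (fun X Y => Rabs (sub h k x y X Y))).
    { intros x y. destruct (IHk _ _ (Int_abs k _ (G1 x y)) (Int_abs k _ (H1 x y))) as [I E].
      rewrite <- E. apply Mono; auto. apply Int_abs; auto.
      intros; unfold sub; apply Rabs_triang. }
    assert (Kc : forall x y, Rabs (Pr k x y * ExpN a b k (fun X Y => Rabs (sub (fun X Y => g X Y + h X Y) k x y X Y))) <=
       Pr k x y * ExpN a b k (fun X Y => Rabs (sub g k x y X Y)) + Pr k x y * ExpN a b k (fun X Y => Rabs (sub h k x y X Y))).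
    { intros x y. rewrite Rabs_pos_eq.
      - rewrite <- Rmult_plus_distr_l. apply Rmult_le_compat_l; [apply Pr_nonneg; auto|]. apply Kb.
      - apply Rmult_le_pos; [apply Pr_nonneg; auto|]. apply ExpN_nonneg; auto. intros; apply Rabs_pos. }
    split; [split; [|split]|].
    + exact Isub.
    + intros x. apply (exs_le _ _ (Kc x) (exs_plus _ _ (G2 x) (H2 x))).
    + eapply exs_le; [|apply (exs_plus _ _ G3 H3)].
      intros x. rewrite Rabs_pos_eq.
      * rewrite <- Series_plus by auto. apply Series_le; [|apply (exs_plus _ _ (G2 x) (H2 x))].
        intros y; split; [|apply Rle_trans with (2 := Kc x y); apply Rle_abs].
        apply Rmult_le_pos; [apply Pr_nonneg; auto|]. apply ExpN_nonneg; auto. intros; apply Rabs_pos.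
      * apply Series_nonneg; intros y. apply Rmult_le_pos; [apply Pr_nonneg; auto|]. apply ExpN_nonneg; auto. intros; apply Rabs_pos.
    + rewrite !ExpN_S. rewrite <- Series_plus by auto. apply Series_ext; intros x.
      rewrite <- Series_plus by auto. apply Series_ext; intros y.
      rewrite <- Rmult_plus_distr_l. f_equal. apply (IHk (sub g k x y) (sub h k x y)); auto.
Qed.

Lemma mono_all k : Hpos k -> forall g h : FnN, IntN k g -> IntN k h ->
  (forall X Y, g X Y <= h X Y) -> ExpN a b k g <= ExpN a b k h.
Proof. intros Hp; apply mono_of_add; auto; apply add_all; auto. Qed.

Lemma abs_all k : Hpos k -> forall g : FnN, IntN k g ->
  Rabs (ExpN a b k g) <= ExpN a b k (fun X Y => Rabs (g X Y)).
Proof. intros Hp; apply abs_of_add; auto; apply add_all; auto. Qed.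

Lemma Int_dom k : Hpos k -> forall g h : FnN, IntN k h -> (forall X Y, Rabs (g X Y) <= h X Y) -> IntN k g.
Proof.
  induction k; intros Hp g h; simpl; auto.
  intros [H1 [H2 H3]] Hle. pose proof (Hpos_S k Hp) as Hk.
  assert (Isub : forall x y, IntN k (sub g k x y)).
  { intros x y. apply (IHk Hk _ (sub h k x y)); auto. intros; apply Hle. }
  assert (Kb : forall x y, ExpN a b k (fun X Y => Rabs (sub g k x y X Y)) <= ExpN a b k (fun X Y => Rabs (sub h k x y X Y))).
  { intros x y. apply mono_all; auto. apply Int_abs; auto. apply Int_abs; auto.
    intros X Y; unfold sub. eapply Rle_trans; [apply Hle|apply Rle_abs]. }
  assert (Kc : forall x y, Rabs (Pr k x y * ExpN a b k (fun X Y => Rabs (sub g k x y X Y))) <=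
     Pr k x y * ExpN a b k (fun X Y => Rabs (sub h k x y X Y))).
  { intros x y. rewrite Rabs_pos_eq.
    - apply Rmult_le_compat_l; [apply Pr_nonneg; auto|]. apply Kb.
    - apply Rmult_le_pos; [apply Pr_nonneg; auto|]. apply ExpN_nonneg; auto. intros; apply Rabs_pos. }
  split; [|split]; auto.
  - intros x. apply (exs_le _ _ (Kc x) (H2 x)).
  - eapply exs_le; [|apply H3]. intros x. rewrite Rabs_pos_eq.
    + apply Series_le; [|apply H2]. intros y; split; [|apply Rle_trans with (2 := Kc x y); apply Rle_abs].
      apply Rmult_le_pos; [apply Pr_nonneg; auto|]. apply ExpN_nonneg; auto. intros; apply Rabs_pos.
    + apply Series_nonneg; intros y. apply Rmult_le_pos; [apply Pr_nonneg; auto|]. apply ExpN_nonneg; auto. intros; apply Rabs_pos.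
Qed.

Lemma sum_all k : Hpos k -> forall (N : nat) (g : nat -> FnN), (forall i, (i < N)%nat -> IntN k (g i)) ->
  IntN k (fun X Y => sumR N (fun i => g i X Y)) /\ ExpN a b k (fun X Y => sumR N (fun i => g i X Y)) = sumR N (fun i => ExpN a b k (g i)).
Proof.
  intros Hp N; induction N; intros g Hg; simpl.
  - split; [apply Int_const|apply ExpN_const].
  - destruct (IHN g) as [I E]; [intros; apply Hg; lia|].
    destruct (add_all k Hp _ (g N) I) as [I2 E2]; [apply Hg; lia|].
    split; auto. rewrite E2, E; auto.
Qed.

End ExpTheory.

Definition E2 (l u : R) (h : nat -> nat -> R) : R :=
  Series (fun x => Series (fun y => pois l x * pois u y * h x y)).
Definition I2 (l u : R) (h : nat -> nat -> R) : Prop :=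
  (forall x, ex_series (fun y => pois l x * pois u y * Rabs (h x y))) /\
  ex_series (fun x => Series (fun y => pois l x * pois u y * Rabs (h x y))).

Lemma upd_eq X k x : upd X k x k = x.
Proof. unfold upd; rewrite Nat.eqb_refl; auto. Qed.
Lemma upd_neq X k x j : j <> k -> upd X k x j = X j.
Proof. intros H; unfold upd. destruct (Nat.eqb_spec j k); [lia|auto]. Qed.

Lemma I2_abs l u h : I2 l u h -> I2 l u (fun x y => Rabs (h x y)).
Proof.
  intros [A B]; split.
  - intros x; eapply exs_ext; [|apply (A x)]; intros; simpl; rewrite Rabs_Rabsolu; auto.
  - eapply exs_ext; [|apply B]; intros; simpl; apply Series_ext; intros; rewrite Rabs_Rabsolu; auto.
Qed.

Lemma E2_scal l u c h : E2 l u (fun x y => c * h x y) = c * E2 l u h.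
Proof.
  unfold E2. rewrite <- Series_scal_l. apply Series_ext; intros x.
  rewrite <- Series_scal_l. apply Series_ext; intros y. ring.
Qed.

Lemma marg1 a b k : Hpos a b k -> forall i h, (i < k)%nat -> I2 (a i) (b i) h ->
  IntN a b k (fun X Y => h (X i) (Y i)) /\ ExpN a b k (fun X Y => h (X i) (Y i)) = E2 (a i) (b i) h.
Proof.
  induction k; intros Hp i h Hi Hh; [lia|].
  pose proof (Hpos_S a b k Hp) as Hk.
  destruct (Nat.eq_dec i k) as [->|Hne].
  - assert (Es : forall x y, sub (fun X Y => h (X k) (Y k)) k x y = fun _ _ => h x y).
    { intros; unfold sub. apply functional_extensionality; intros X.
      apply functional_extensionality; intros Y. rewrite !upd_eq; auto. }
    destruct Hh as [H1 H2].
    split; [split; [|split]|].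
    + intros x y; rewrite Es; apply Int_const.
    + intros x. eapply exs_ext; [|apply (H1 x)]. intros y; simpl.
      rewrite Es, ExpN_const; unfold Pr; auto.
    + eapply exs_ext; [|apply H2]. intros x; simpl. apply Series_ext; intros y.
      rewrite Es, ExpN_const; unfold Pr; auto.
    + rewrite ExpN_S. unfold E2. apply Series_ext; intros x; apply Series_ext; intros y.
      rewrite Es, ExpN_const; unfold Pr; auto.
  - assert (Hi' : (i < k)%nat) by lia.
    assert (Es : forall x y, sub (fun X Y => h (X i) (Y i)) k x y = fun X Y => h (X i) (Y i)).
    { intros; unfold sub. apply functional_extensionality; intros X.
      apply functional_extensionality; intros Y. rewrite !upd_neq; auto. }
    destruct (IHk Hk i h Hi' Hh) as [I E].
    destruct (IHk Hk i _ Hi' (I2_abs _ _ _ Hh)) as [Ia Ea].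
    assert (Ea' : forall x y, ExpN a b k (fun X Y => Rabs (sub (fun X Y => h (X i) (Y i)) k x y X Y)) = E2 (a i) (b i) (fun x y => Rabs (h x y))).
    { intros x y; rewrite Es; exact Ea. }
    assert (Py : forall x c, Series (fun y => Pr a b k x y * c) = pois (a k) x * c).
    { intros x c. unfold Pr. transitivity (pois (a k) x * c * Series (pois (b k))).
      - rewrite <- Series_scal_l; apply Series_ext; intros; ring.
      - rewrite pois_Series; ring. }
    split; [split; [|split]|].
    + intros x y; rewrite Es; auto.
    + intros x. eapply exs_ext; [|apply (exs_scal (pois (a k) x * E2 (a i) (b i) (fun x y => Rabs (h x y))) _ (pois_ex (b k)))].
      intros y; rewrite Ea'; unfold Pr; ring.
    + eapply exs_ext; [|apply (exs_scal (E2 (a i) (b i) (fun x y => Rabs (h x y))) _ (pois_ex (a k)))].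
      intros x. symmetry. rewrite (Series_ext _ (fun y => Pr a b k x y * E2 (a i) (b i) (fun x y => Rabs (h x y)))).
      rewrite Py; ring. intros y; rewrite Ea'; auto.
    + rewrite ExpN_S. transitivity (Series (fun x => pois (a k) x * E2 (a i) (b i) h)).
      * apply Series_ext; intros x. rewrite <- Py. apply Series_ext; intros y. rewrite Es, E; auto.
      * rewrite Series_scal_r, pois_Series; ring.
Qed.

Lemma Py_lem a b k x c : Series (fun y => Pr a b k x y * c) = pois (a k) x * c.
Proof.
  unfold Pr. transitivity (pois (a k) x * c * Series (pois (b k))).
  - rewrite <- Series_scal_l; apply Series_ext; intros; ring.
  - rewrite pois_Series; ring.
Qed.

Lemma lvl_const a b k (g g' : FnN) c c' :
  (forall x y, sub g k x y = g') -> IntN a b k g' -> ExpN a b k g' = c ->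
  ExpN a b k (fun X Y => Rabs (g' X Y)) = c' ->
  IntN a b (S k) g /\ ExpN a b (S k) g = c.
Proof.
  intros Es I E Ea.
  split; [split; [|split]|].
  - intros x y; rewrite Es; auto.
  - intros x. eapply exs_ext; [|apply (exs_scal (pois (a k) x * c') _ (pois_ex (b k)))].
    intros y; rewrite Es, Ea; unfold Pr; ring.
  - eapply exs_ext; [|apply (exs_scal c' _ (pois_ex (a k)))].
    intros x. symmetry. rewrite (Series_ext _ (fun y => Pr a b k x y * c')).
    rewrite Py_lem; ring. intros y; rewrite Es, Ea; auto.
  - rewrite ExpN_S. transitivity (Series (fun x => pois (a k) x * c)).
    + apply Series_ext; intros x. rewrite <- (Py_lem a b). apply Series_ext; intros y. rewrite Es, E; auto.
    + rewrite Series_scal_r, pois_Series; ring.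
Qed.

Lemma marg2_top a b k : Hpos a b (S k) -> forall j h g, (j < k)%nat ->
  I2 (a k) (b k) h -> I2 (a j) (b j) g ->
  IntN a b (S k) (fun X Y => h (X k) (Y k) * g (X j) (Y j)) /\
  ExpN a b (S k) (fun X Y => h (X k) (Y k) * g (X j) (Y j)) = E2 (a k) (b k) h * E2 (a j) (b j) g.
Proof.
  intros Hp j h g Hj Hh Hg.
  pose proof (Hpos_S a b k Hp) as Hk.
  destruct (marg1 a b k Hk j g Hj Hg) as [Ig Eg].
  destruct (marg1 a b k Hk j _ Hj (I2_abs _ _ _ Hg)) as [Iga Ega].
  assert (Es : forall x y, sub (fun X Y => h (X k) (Y k) * g (X j) (Y j)) k x y = fun X Y => h x y * g (X j) (Y j)).
  { intros; unfold sub. apply functional_extensionality; intros X.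
    apply functional_extensionality; intros Y. rewrite !upd_eq, !upd_neq by lia; auto. }
  assert (Ea : forall x y, ExpN a b k (fun X Y => Rabs (sub (fun X Y => h (X k) (Y k) * g (X j) (Y j)) k x y X Y)) =
     Rabs (h x y) * E2 (a j) (b j) (fun x y => Rabs (g x y))).
  { intros x y. rewrite Es, <- Ega, <- ExpN_scal. apply ExpN_ext; intros; apply Rabs_mult. }
  destruct Hh as [H1 H2].
  split; [split; [|split]|].
  - intros x y; rewrite Es. apply Int_scal; auto.
  - intros x. eapply exs_ext; [|apply (exs_scal (E2 (a j) (b j) (fun x y => Rabs (g x y))) _ (H1 x))].
    intros y; cbv beta. rewrite Ea; unfold Pr; ring.
  - eapply exs_ext; [|apply (exs_scal (E2 (a j) (b j) (fun x y => Rabs (g x y))) _ H2)].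
    intros x; cbv beta. rewrite <- Series_scal_l. apply Series_ext; intros y. rewrite Ea; unfold Pr; ring.
  - rewrite ExpN_S. unfold E2 at 1. rewrite Rmult_comm, <- Series_scal_l. apply Series_ext; intros x.
    rewrite <- Series_scal_l. apply Series_ext; intros y.
    rewrite Es, ExpN_scal, Eg. unfold Pr; ring.
Qed.

Lemma marg2 a b k : Hpos a b k -> forall i j h g, (i < k)%nat -> (j < k)%nat -> i <> j ->
  I2 (a i) (b i) h -> I2 (a j) (b j) g ->
  IntN a b k (fun X Y => h (X i) (Y i) * g (X j) (Y j)) /\
  ExpN a b k (fun X Y => h (X i) (Y i) * g (X j) (Y j)) = E2 (a i) (b i) h * E2 (a j) (b j) g.
Proof.
  induction k; intros Hp i j h g Hi Hj Hij Hh Hg; [lia|].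
  pose proof (Hpos_S a b k Hp) as Hk.
  destruct (Nat.eq_dec i k) as [->|Hi'].
  - apply marg2_top; auto; lia.
  - destruct (Nat.eq_dec j k) as [->|Hj'].
    + destruct (marg2_top a b k Hp i g h) as [I E]; auto; [lia|].
      split.
      * eapply Int_ext; [|exact I]. intros; simpl; ring.
      * rewrite Rmult_comm, <- E. apply ExpN_ext; intros; ring.
    + destruct (IHk Hk i j h g) as [I E]; auto; try lia.
      destruct (IHk Hk i j _ _ ltac:(lia) ltac:(lia) Hij (I2_abs _ _ _ Hh) (I2_abs _ _ _ Hg)) as [Ia Ea].
      apply (lvl_const a b k _ (fun X Y => h (X i) (Y i) * g (X j) (Y j)) _
        (E2 (a i) (b i) (fun x y => Rabs (h x y)) * E2 (a j) (b j) (fun x y => Rabs (g x y)))); auto.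
      * intros; unfold sub. apply functional_extensionality; intros X.
        apply functional_extensionality; intros Y. rewrite !upd_neq by lia; auto.
      * rewrite <- Ea. apply ExpN_ext; intros; apply Rabs_mult.
Qed.

Lemma E2_prod l u (f g : nat -> R) :
  Xs1 l (fun k => Rabs (f k)) -> Xs1 u (fun k => Rabs (g k)) ->
  I2 l u (fun x y => f x * g y) /\ E2 l u (fun x y => f x * g y) = Ex1 l f * Ex1 u g.
Proof.
  unfold Xs1, Ex1, I2, E2. intros Hf Hg.
  assert (In : forall (F G : nat -> R) x, Series (fun y => pois l x * pois u y * (F x * G y)) = pois l x * F x * Series (fun y => pois u y * G y)).
  { intros F G x. rewrite <- Series_scal_l. apply Series_ext; intros; ring. }
  split; [split|].
  - intros x. eapply exs_ext; [|apply (exs_scal (pois l x * Rabs (f x)) _ Hg)]. intros y; simpl.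
    rewrite Rabs_mult; ring.
  - eapply exs_ext; [|apply (exs_scal (Series (fun y => pois u y * Rabs (g y))) _ Hf)]. intros x; simpl.
    rewrite (Series_ext (fun y => pois l x * pois u y * Rabs (f x * g y)) (fun y => pois l x * pois u y * (Rabs (f x) * Rabs (g y)))).
    rewrite (In (fun k => Rabs (f k)) (fun k => Rabs (g k))); ring. intros; rewrite Rabs_mult; auto.
  - rewrite (Series_ext (fun x => Series (fun y => pois l x * pois u y * (f x * g y))) (fun x => Series (fun y => pois u y * g y) * (pois l x * f x))).
    rewrite Series_scal_l; ring. intros x; rewrite (In f g); ring.
Qed.

Lemma E2_lvl1 l u h : ExpN (fun _ => l) (fun _ => u) 1 (fun X Y => h (X O) (Y O)) = E2 l u h.
Proof. reflexivity. Qed.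

Lemma I2_lvl1 l u h : I2 l u h <-> IntN (fun _ => l) (fun _ => u) 1 (fun X Y => h (X O) (Y O)).
Proof.
  unfold I2; simpl. split.
  - intros [A B]; split; [|split]; auto.
  - intros [_ [A B]]; split; auto.
Qed.

Lemma Hpos1 l u : 0 <= l -> 0 <= u -> Hpos (fun _ => l) (fun _ => u) 1.
Proof. intros; intros i _; auto. Qed.

Lemma E2_lin2 l u c h1 h2 : 0 <= l -> 0 <= u -> I2 l u h1 -> I2 l u h2 ->
  I2 l u (fun x y => c * h1 x y + h2 x y) /\ E2 l u (fun x y => c * h1 x y + h2 x y) = c * E2 l u h1 + E2 l u h2.
Proof.
  intros Hl Hu H1 H2. apply I2_lvl1 in H1. apply I2_lvl1 in H2.
  pose proof (Int_scal _ _ 1 c _ H1) as H3.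
  destruct (add_all _ _ 1 (Hpos1 l u Hl Hu) _ _ H3 H2) as [I E].
  split.
  - apply I2_lvl1. exact I.
  - rewrite <- !E2_lvl1. rewrite <- ExpN_scal. exact E.
Qed.

Lemma E2_mono l u h1 h2 : 0 <= l -> 0 <= u -> I2 l u h1 -> I2 l u h2 ->
  (forall x y, h1 x y <= h2 x y) -> E2 l u h1 <= E2 l u h2.
Proof.
  intros Hl Hu H1 H2 Hle. apply I2_lvl1 in H1. apply I2_lvl1 in H2. rewrite <- !E2_lvl1.
  apply (mono_all _ _ 1 (Hpos1 l u Hl Hu)); auto.
Qed.

Lemma I2_dom l u g h : 0 <= l -> 0 <= u -> I2 l u h ->
  (forall x y, Rabs (g x y) <= h x y) -> I2 l u g.
Proof.
  intros Hl Hu H Hle. apply I2_lvl1 in H. apply I2_lvl1.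
  apply (Int_dom _ _ 1 (Hpos1 l u Hl Hu) _ _ H); auto.
Qed.

Lemma E2_const l u c : I2 l u (fun _ _ => c) /\ E2 l u (fun _ _ => c) = c.
Proof.
  split; [apply I2_lvl1; apply (Int_const _ _ 1 c)|].
  rewrite <- E2_lvl1. apply ExpN_const.
Qed.

Definition val4 l c0 c1 c2 c3 c4 :=
  c0 + c1 * l + c2 * (l^2 + l) + c3 * (l^3 + 3*l^2 + l) + c4 * (l^4 + 6*l^3 + 7*l^2 + l).

Lemma abs_P4 c0 c1 c2 c3 c4 x : 0 <= x ->
  Rabs (P4 c0 c1 c2 c3 c4 x) <= P4 (Rabs c0) (Rabs c1) (Rabs c2) (Rabs c3) (Rabs c4) x.
Proof.
  intros Hx. unfold P4.
  assert (T : forall c j, Rabs (c * x ^ j) = Rabs c * x ^ j).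
  { intros. rewrite Rabs_mult, (Rabs_pos_eq (x ^ j)); auto. apply pow_le; auto. }
  pose proof (T c1 1%nat) as T1. pose proof (T c2 2%nat) as T2. pose proof (T c3 3%nat) as T3. pose proof (T c4 4%nat) as T4.
  simpl pow in *. rewrite !Rmult_1_r in *.
  pose proof (Rabs_triang (c0 + c1 * x + c2 * (x*x) + c3 * (x*(x*x))) (c4 * (x*(x*(x*x))))).
  pose proof (Rabs_triang (c0 + c1 * x + c2 * (x*x)) (c3 * (x*(x*x)))).
  pose proof (Rabs_triang (c0 + c1 * x) (c2 * (x*x))).
  pose proof (Rabs_triang c0 (c1 * x)).
  lra.
Qed.

Lemma Xs1_absP4 l c0 c1 c2 c3 c4 : 0 <= l -> Xs1 l (fun k => Rabs (P4 c0 c1 c2 c3 c4 (INR k))).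
Proof.
  intros Hl. destruct (P4_ok l (Rabs c0) (Rabs c1) (Rabs c2) (Rabs c3) (Rabs c4)) as [X _].
  unfold Xs1 in *. eapply exs_le; [|exact X]. intros k.
  pose proof (pos_INR k) as Hk. pose proof (pois_nonneg l k Hl).
  rewrite Rabs_mult, Rabs_Rabsolu, (Rabs_pos_eq (pois l k)) by auto.
  apply Rmult_le_compat_l; auto. apply abs_P4; auto.
Qed.

Lemma E2_P4 l u c0 c1 c2 c3 c4 d0 d1 d2 d3 d4 : 0 <= l -> 0 <= u ->
  I2 l u (fun x y => P4 c0 c1 c2 c3 c4 (INR x) * P4 d0 d1 d2 d3 d4 (INR y)) /\
  E2 l u (fun x y => P4 c0 c1 c2 c3 c4 (INR x) * P4 d0 d1 d2 d3 d4 (INR y)) =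
    val4 l c0 c1 c2 c3 c4 * val4 u d0 d1 d2 d3 d4.
Proof.
  intros Hl Hu.
  destruct (E2_prod l u (fun k => P4 c0 c1 c2 c3 c4 (INR k)) (fun k => P4 d0 d1 d2 d3 d4 (INR k)))
    as [I E]; try apply Xs1_absP4; auto.
  split; auto. rewrite E, (proj2 (P4_ok l c0 c1 c2 c3 c4)), (proj2 (P4_ok u d0 d1 d2 d3 d4)). reflexivity.
Qed.

Lemma I2_ext l u h g : (forall x y, h x y = g x y) -> I2 l u h -> I2 l u g.
Proof.
  intros H [A B]; split.
  - intros x; eapply exs_ext; [|apply (A x)]; intros; simpl; rewrite H; auto.
  - eapply exs_ext; [|apply B]; intros; simpl; apply Series_ext; intros; rewrite H; auto.
Qed.
Lemma E2_ext l u h g : (forall x y, h x y = g x y) -> E2 l u h = E2 l u g.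
Proof. intros H; unfold E2; apply Series_ext; intros; apply Series_ext; intros; rewrite H; auto. Qed.

Definition Zf (x y : nat) : R := (INR x - INR y)^2 - INR x - INR y.

Lemma E2_Zf l u : 0 <= l -> 0 <= u -> I2 l u Zf /\ E2 l u Zf = (l - u)^2.
Proof.
  intros Hl Hu.
  destruct (E2_P4 l u 0 (-1) 1 0 0 1 0 0 0 0 Hl Hu) as [I1 E1'].
  destruct (E2_P4 l u 1 0 0 0 0 0 (-1) 1 0 0 Hl Hu) as [I2' E2'].
  destruct (E2_P4 l u 0 1 0 0 0 0 1 0 0 0 Hl Hu) as [I3 E3].
  destruct (E2_lin2 l u (-2) _ _ Hl Hu I3 I2') as [I4 E4].
  destruct (E2_lin2 l u 1 _ _ Hl Hu I1 I4) as [I5 E5].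
  assert (Eq : forall x y, 1 * (P4 0 (-1) 1 0 0 (INR x) * P4 1 0 0 0 0 (INR y)) +
     (-2 * (P4 0 1 0 0 0 (INR x) * P4 0 1 0 0 0 (INR y)) + P4 1 0 0 0 0 (INR x) * P4 0 (-1) 1 0 0 (INR y)) = Zf x y).
  { intros; unfold Zf, P4; ring. }
  split.
  - eapply I2_ext; [exact Eq|exact I5].
  - rewrite <- (E2_ext l u _ _ Eq). rewrite E5, E4, E1', E2', E3. unfold val4; ring.
Qed.

Definition Gf (l u al ka be ga de ep : R) (x y : nat) : R :=
  al + ka * (INR x + INR y) + be * (INR x - l)^2 + ga * (INR y - u)^2 + de * (INR x - l)^4 + ep * (INR y - u)^4.

Lemma E2_Gf l u al ka be ga de ep : 0 <= l -> 0 <= u ->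
  I2 l u (Gf l u al ka be ga de ep) /\
  E2 l u (Gf l u al ka be ga de ep) = al + ka * (l + u) + be * l + ga * u + de * (l + 3 * l^2) + ep * (u + 3 * u^2).
Proof.
  intros Hl Hu.
  destruct (E2_P4 l u (al + be * l^2 + de * l^4) (ka - 2 * be * l - 4 * de * l^3) (be + 6 * de * l^2) (-4 * de * l) de
     1 0 0 0 0 Hl Hu) as [I1 E1'].
  destruct (E2_P4 l u 1 0 0 0 0 (ga * u^2 + ep * u^4) (ka - 2 * ga * u - 4 * ep * u^3) (ga + 6 * ep * u^2) (-4 * ep * u) ep
     Hl Hu) as [I2' E2'].
  destruct (E2_lin2 l u 1 _ _ Hl Hu I1 I2') as [I5 E5].
  assert (Eq : forall x y, 1 * (P4 (al + be * l^2 + de * l^4) (ka - 2 * be * l - 4 * de * l^3) (be + 6 * de * l^2) (-4 * de * l) de (INR x) * P4 1 0 0 0 0 (INR y)) +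
     P4 1 0 0 0 0 (INR x) * P4 (ga * u^2 + ep * u^4) (ka - 2 * ga * u - 4 * ep * u^3) (ga + 6 * ep * u^2) (-4 * ep * u) ep (INR y) = Gf l u al ka be ga de ep x y).
  { intros; unfold Gf, P4; ring. }
  split.
  - eapply I2_ext; [exact Eq|exact I5].
  - rewrite <- (E2_ext l u _ _ Eq). rewrite E5, E1', E2'. unfold val4; ring.
Qed.

Lemma div_le_l a b c : 0 < c -> a <= b * c -> a / c <= b.
Proof. intros Hc H. apply Rmult_le_reg_r with c; auto. unfold Rdiv; rewrite Rmult_assoc, Rinv_l; lra. Qed.
Lemma le_div_r a b c : 0 < c -> a * c <= b -> a <= b / c.
Proof. intros Hc H. apply Rmult_le_reg_r with c; auto. unfold Rdiv; rewrite Rmult_assoc, Rinv_l; lra. Qed.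
Lemma div_nonneg a b : 0 <= a -> 0 <= b -> 0 <= a / b.
Proof. intros Ha Hb. destruct Hb as [Hb|Hb].
  - unfold Rdiv; apply Rmult_le_pos; auto. left; apply Rinv_0_lt_compat; auto.
  - rewrite <- Hb; unfold Rdiv; rewrite Rinv_0; lra. Qed.

Lemma sq2 A B : (A + B)^2 <= 2 * A^2 + 2 * B^2.
Proof. pose proof (pow2_ge_0 (A - B)). nra. Qed.
Lemma sq2m A B : (A - B)^2 <= 2 * A^2 + 2 * B^2.
Proof. pose proof (pow2_ge_0 (A + B)). nra. Qed.
Lemma qu8 A B : (A + B)^4 <= 8 * A^4 + 8 * B^4.
Proof.
  assert (H : (A+B)^4 = ((A+B)^2)^2) by ring. rewrite H.
  assert (H1 : 0 <= (A+B)^2) by apply pow2_ge_0. pose proof (sq2 A B).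
  apply Rle_trans with ((2 * A^2 + 2 * B^2)^2).
  - apply pow_incr; auto.
  - pose proof (pow2_ge_0 (A^2 - B^2)). nra.
Qed.

Definition Gr (l u al ka be ga de ep x y : R) : R :=
  al + ka * (x + y) + be * (x - l)^2 + ga * (y - u)^2 + de * (x - l)^4 + ep * (y - u)^4.

Section Pt.
Variables (x y l u r f : R).
Hypotheses (Hx : 0 <= x) (Hy : 0 <= y) (Hl : 0 <= l) (Hu : 0 <= u) (Hr : 0 < r)
  (Hf1 : 1 <= f) (Hf2 : Rabs (x - y) <= r * f) (Hf3 : x + y <= r^2 * f).

Lemma ptA : f <= 1 + Rabs (x - y) / r + (x + y) / r^2 ->
  f <= Gr l u (3/2 + Rabs (l - u) / r) (/ r^2) (/ r^2) (/ r^2) 0 0 x y.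
Proof.
  intros Hf. unfold Gr. eapply Rle_trans; [exact Hf|].
  assert (Hr2 : 0 < r^2) by nra.
  assert (T : Rabs (x - y) / r <= Rabs (l - u) / r + ((x - y - (l - u))^2 / r^2 + 1) / 2).
  { assert (T1 : Rabs (x - y) <= Rabs (l - u) + Rabs (x - y - (l - u))).
    { replace (x - y) with ((l - u) + (x - y - (l - u))) at 1 by ring. apply Rabs_triang. }
    assert (T2 : Rabs (x - y - (l - u)) / r <= ((x - y - (l - u))^2 / r^2 + 1) / 2).
    { set (t := x - y - (l - u)). apply div_le_l; auto.
      replace (((t ^ 2 / r ^ 2 + 1) / 2) * r) with ((t^2 + r^2) / (2 * r)) by (field; lra).
      apply le_div_r; [lra|]. pose proof (Rabs_pos t). pose proof (pow2_abs t).
      pose proof (pow2_ge_0 (Rabs t - r)). nra. }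
    assert (T5 : Rabs (x - y) / r <= Rabs (l - u) / r + Rabs (x - y - (l - u)) / r).
    { unfold Rdiv; rewrite <- Rmult_plus_distr_r. apply Rmult_le_compat_r; [left; apply Rinv_0_lt_compat; auto|]. lra. }
    lra. }
  assert (T3 : (x - y - (l - u))^2 <= 2 * (x - l)^2 + 2 * (y - u)^2).
  { replace (x - y - (l - u)) with ((x - l) - (y - u)) by ring. apply sq2m. }
  assert (T4 : (x - y - (l - u))^2 / r^2 <= 2 * (x - l)^2 / r^2 + 2 * (y - u)^2 / r^2).
  { unfold Rdiv. rewrite <- Rmult_plus_distr_r. apply Rmult_le_compat_r; [left; apply Rinv_0_lt_compat; auto|]. lra. }
  assert (T6 : 2 * (x - l)^2 / r^2 + 2 * (y - u)^2 / r^2 = 2 * ((x - l)^2 * / r^2 + (y - u)^2 * / r^2)) by (unfold Rdiv; ring).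
  assert (T7 : ((x - y - (l - u))^2 / r^2 + 1) / 2 <= (x - l)^2 * / r^2 + (y - u)^2 * / r^2 + 1/2) by lra.
  assert (T8 : (x + y) / r^2 = / r^2 * (x + y)) by (unfold Rdiv; ring).
  lra.
Qed.

Lemma ptBa : (l - u)^2 / f <= Gr l u ((l - u)^2) 0 0 0 0 0 x y.
Proof.
  unfold Gr. apply div_le_l; [lra|]. pose proof (pow2_ge_0 (l-u)).
  replace ((l - u) ^ 2 + 0 * (x + y) + 0 * (x - l) ^ 2 + 0 * (y - u) ^ 2 + 0 * (x - l) ^ 4 + 0 * (y - u) ^ 4) with ((l-u)^2) by ring.
  nra.
Qed.


Lemma Dsq_le : (l - u)^2 <= (l + u)^2.
Proof. nra. Qed.

Lemma w_big : x + y < (l + u) / 2 -> 0 < l + u -> (l + u)^2 <= 4 * ((x - l) + (y - u))^2 /\ (l + u)^4 <= 16 * ((x - l) + (y - u))^4.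
Proof.
  intros Hs HS. set (w := (x - l) + (y - u)).
  assert (Hw : (l + u) / 2 < - w) by (unfold w; lra).
  assert (H1 : ((l + u)/2)^2 <= (-w)^2) by (apply pow_incr; lra).
  assert (H2 : ((l + u)/2)^4 <= (-w)^4) by (apply pow_incr; lra).
  split.
  - replace ((-w)^2) with (w^2) in H1 by ring. lra.
  - replace ((-w)^4) with (w^4) in H2 by ring. lra.
Qed.

Lemma ptBb1 : r < Rabs (l - u) -> r * Rabs (l - u) <= l + u ->
  (l - u)^2 / f <= Gr l u (2 * r^2 * (l - u)^2 / (l + u)) 0 0 0 (128 / (l + u)^2) (128 / (l + u)^2) x y.
Proof.
  intros HD HS. set (S := l + u) in *. set (D := l - u) in *.
  assert (HS0 : 0 < S) by (pose proof (Rabs_pos D); nra).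
  assert (HD2 : D^2 <= S^2) by (unfold D, S; apply Dsq_le).
  assert (HD0 : 0 <= D^2) by apply pow2_ge_0.
  assert (A4 : 0 <= (x - l)^4) by (replace ((x-l)^4) with (((x-l)^2)^2) by ring; apply pow2_ge_0).
  assert (B4 : 0 <= (y - u)^4) by (replace ((y-u)^4) with (((y-u)^2)^2) by ring; apply pow2_ge_0).
  assert (HS2 : 0 < S^2) by nra.
  assert (P1 : 0 <= 128 / S^2) by (apply div_nonneg; lra).
  unfold Gr.
  assert (Z : forall a : R, a + 0 * (x + y) + 0 * (x - l)^2 + 0 * (y - u)^2 + 128 / S^2 * (x - l)^4 + 128 / S^2 * (y - u)^4
     = a + 128 / S^2 * ((x - l)^4 + (y - u)^4)) by (intros; ring).
  rewrite Z.
  destruct (Rle_or_lt (S / 2) (x + y)) as [Hs|Hs].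
  - assert (K : D^2 / f <= 2 * r^2 * D^2 / S).
    { apply div_le_l; [lra|].
      assert (K1 : S <= 2 * r^2 * f) by lra.
      replace (2 * r ^ 2 * D ^ 2 / S * f) with (D^2 * ((2 * r^2 * f) / S)) by (field; lra).
      assert (K2 : 1 <= (2 * r^2 * f) / S) by (apply le_div_r; lra).
      nra. }
    assert (0 <= 128 / S^2 * ((x - l)^4 + (y - u)^4)) by (apply Rmult_le_pos; lra).
    lra.
  - destruct (w_big Hs HS0) as [_ W]. fold S in W.
    pose proof (qu8 (x - l) (y - u)) as Q.
    assert (K : S^2 <= 128 / S^2 * ((x - l)^4 + (y - u)^4)).
    { replace (128 / S ^ 2 * ((x - l) ^ 4 + (y - u) ^ 4)) with (16 * (8 * (x - l) ^ 4 + 8 * (y - u) ^ 4) / S^2) by (field; lra).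
      apply le_div_r; [lra|]. replace (S^2 * S^2) with (S^4) by ring. lra. }
    assert (K2 : D^2 / f <= D^2) by (apply div_le_l; nra).
    assert (0 <= 2 * r ^ 2 * D ^ 2 / S) by (apply div_nonneg; [|lra]; nra).
    lra.
Qed.

Lemma ptBb2 : r < Rabs (l - u) ->
  (l - u)^2 / f <= Gr l u (2 * r * Rabs (l - u)) 0 8 8 0 0 x y.
Proof.
  intros HD. set (D := l - u) in *.
  assert (HD0 : 0 <= D^2) by apply pow2_ge_0.
  assert (HDa : D^2 = Rabs D ^ 2) by (rewrite <- pow2_abs; auto).
  unfold Gr.
  replace (2 * r * Rabs D + 0 * (x + y) + 8 * (x - l) ^ 2 + 8 * (y - u) ^ 2 + 0 * (x - l) ^ 4 + 0 * (y - u) ^ 4)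
    with (2 * r * Rabs D + 4 * (2 * (x - l) ^ 2 + 2 * (y - u) ^ 2)) by ring.
  pose proof (sq2m (x - l) (y - u)) as Q.
  set (v := x - y - D).
  assert (Hv : (x - l) - (y - u) = v) by (unfold v, D; ring). rewrite Hv in Q.
  assert (0 <= 2 * (x - l) ^ 2 + 2 * (y - u) ^ 2) by (pose proof (pow2_ge_0 (x-l)); pose proof (pow2_ge_0 (y-u)); lra).
  destruct (Rle_or_lt (Rabs D / 2) (Rabs v)) as [Hc|Hc].
  - assert (K : D^2 <= 4 * v^2).
    { rewrite HDa, <- (pow2_abs v). pose proof (Rabs_pos D). nra. }
    assert (K2 : D^2 / f <= D^2) by (apply div_le_l; nra).
    pose proof (Rabs_pos D). nra.
  - assert (T : Rabs D <= Rabs (x - y) + Rabs v).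
    { replace D with ((x - y) + - v) by (unfold v; ring). eapply Rle_trans; [apply Rabs_triang|].
      rewrite Rabs_Ropp; lra. }
    assert (K : D^2 / f <= 2 * r * Rabs D).
    { apply div_le_l; [lra|]. rewrite HDa. pose proof (Rabs_pos D). nra. }
    lra.
Qed.

Lemma ptC : 0 < l + u ->
  (150 * (l + u)^2 + 24 * (l - u)^2 * (l + u) + 54 * (l + u)) / f^2 <=
  Gr l u (54 * (l + u) + 600 * r^4 + 96 * (l + u) * r^2) 0 (1200 + 768 * r^4 / (l + u)) (1200 + 768 * r^4 / (l + u))
     (3072 / (l + u)) (3072 / (l + u)) x y.
Proof.
  intros HS0. set (S := l + u) in *. set (D := l - u).
  set (A := x - l). set (B := y - u).
  assert (HD2 : D^2 <= S^2) by (unfold D, S; apply Dsq_le).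
  assert (HD0 : 0 <= D^2) by apply pow2_ge_0.
  assert (A2 : 0 <= A^2) by apply pow2_ge_0. assert (B2 : 0 <= B^2) by apply pow2_ge_0.
  assert (A4 : 0 <= A^4) by (replace (A^4) with ((A^2)^2) by ring; apply pow2_ge_0).
  assert (B4 : 0 <= B^4) by (replace (B^4) with ((B^2)^2) by ring; apply pow2_ge_0).
  assert (Hf2' : 0 < f^2) by nra.
  assert (Hr4 : 0 < r^4) by (apply pow_lt; lra).
  assert (Hr2 : 0 < r^2) by (apply pow_lt; lra).
  pose proof (sq2 A B) as W2. pose proof (qu8 A B) as W4. pose proof (sq2m A B) as V2.
  set (w := A + B) in *. set (v := A - B) in *.
  assert (Hw : x + y = S + w) by (unfold w, A, B, S; ring).
  assert (Hv : x - y = D + v) by (unfold v, A, B, D; ring).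
  assert (P1 : 54 * S / f^2 <= 54 * S).
  { apply div_le_l; [lra|]. assert (1 <= f^2) by nra. nra. }
  assert (P2 : 150 * S^2 / f^2 <= 600 * r^4 + 1200 * (A^2 + B^2)).
  { apply div_le_l; [lra|].
    destruct (Rle_or_lt (S / 2) (x + y)) as [Hs|Hs].
    - assert (K1 : S <= 2 * r^2 * f) by lra.
      assert (K2 : S^2 <= 4 * r^4 * f^2).
      { replace (4 * r^4 * f^2) with ((2 * r^2 * f)^2) by ring. apply pow_incr; lra. }
      assert (1 <= f^2) by nra. nra.
    - destruct (w_big Hs HS0) as [W _]. fold S A B w in W.
      assert (1 <= f^2) by nra. nra. }
  assert (P3 : 24 * D^2 * S / f^2 <= 96 * S * r^2 + 3072 / S * (A^4 + B^4) + 768 * r^4 / S * (A^2 + B^2)).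
  { assert (N1 : 0 <= 3072 / S * (A^4 + B^4)) by (apply Rmult_le_pos; [apply div_nonneg|]; lra).
    assert (N2 : 0 <= 768 * r^4 / S * (A^2 + B^2)) by (apply Rmult_le_pos; [apply div_nonneg|]; lra).
    assert (N3 : 0 <= 96 * S * r^2) by nra.
    destruct (Rle_or_lt (Rabs D / 2) (Rabs v)) as [Hc|Hc].
    + assert (K : D^2 <= 4 * v^2).
      { rewrite <- (pow2_abs D), <- (pow2_abs v). pose proof (Rabs_pos D). nra. }
      destruct (Rle_or_lt (S / 2) (x + y)) as [Hs|Hs].
      * assert (K1 : S <= 2 * r^2 * f) by lra.
        assert (K2 : S^2 <= 4 * r^4 * f^2).
        { replace (4 * r^4 * f^2) with ((2 * r^2 * f)^2) by ring. apply pow_incr; lra. }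
        assert (K3 : 24 * D^2 * S / f^2 <= 768 * r^4 / S * (A^2 + B^2)).
        { apply div_le_l; [lra|].
          replace (768 * r ^ 4 / S * (A ^ 2 + B ^ 2) * f ^ 2) with (384 * (r^4 * f^2) * (2 * A^2 + 2 * B^2) / S) by (field; lra).
          apply le_div_r; [lra|].
          assert (v^2 <= 2 * A^2 + 2 * B^2) by lra.
          assert (0 <= v^2) by apply pow2_ge_0.
          apply Rle_trans with (24 * (4 * v^2) * S * S).
          - assert (0 <= S * S) by nra. nra.
          - replace (24 * (4 * v ^ 2) * S * S) with (96 * v^2 * S^2) by ring.
            apply Rle_trans with (96 * v^2 * (4 * r^4 * f^2)); [nra|].
            nra. }
        lra.
      * destruct (w_big Hs HS0) as [_ W]. fold S A B w in W.
        assert (K3 : 24 * D^2 * S / f^2 <= 3072 / S * (A^4 + B^4)).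
        { apply div_le_l; [lra|].
          replace (3072 / S * (A ^ 4 + B ^ 4) * f ^ 2) with (384 * f^2 * (8 * A^4 + 8 * B^4) / S) by (field; lra).
          apply le_div_r; [lra|].
          assert (0 <= w^4) by (replace (w^4) with ((w^2)^2) by ring; apply pow2_ge_0).
          assert (1 <= f^2) by nra.
          apply Rle_trans with (24 * S^2 * S * S); [assert (0 <= S * S) by nra; nra|].
          replace (24 * S ^ 2 * S * S) with (24 * S^4) by ring.
          apply Rle_trans with (24 * (16 * w^4)); [lra|]. nra. }
        lra.
    + assert (T : Rabs D <= Rabs (x - y) + Rabs v).
      { replace D with ((x - y) + - v) by lra. eapply Rle_trans; [apply Rabs_triang|].
        rewrite Rabs_Ropp; lra. }
      assert (K : 24 * D^2 * S / f^2 <= 96 * S * r^2).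
      { apply div_le_l; [lra|].
        assert (K1 : Rabs D < 2 * (r * f)) by lra.
        assert (K2 : D^2 <= 4 * r^2 * f^2).
        { rewrite <- (pow2_abs D). replace (4 * r^2 * f^2) with ((2 * (r * f))^2) by ring.
          apply pow_incr; split; [apply Rabs_pos|lra]. }
        nra. }
      lra. }
  unfold Gr. fold A B.
  replace ((150 * S ^ 2 + 24 * (l - u) ^ 2 * S + 54 * S) / f ^ 2) with (150 * S^2 / f^2 + 24 * D^2 * S / f^2 + 54 * S / f^2)
    by (unfold D; field; lra).
  assert (E : 54 * S + 600 * r ^ 4 + 96 * S * r ^ 2 + 0 * (x + y) + (1200 + 768 * r ^ 4 / S) * A ^ 2 +
     (1200 + 768 * r ^ 4 / S) * B ^ 2 + 3072 / S * A ^ 4 + 3072 / S * B ^ 4 =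
     54 * S + (600 * r^4 + 1200 * (A^2 + B^2)) + (96 * S * r^2 + 3072 / S * (A^4 + B^4) + 768 * r^4 / S * (A^2 + B^2))) by ring.
  rewrite E. lra.
Qed.

End Pt.

Lemma sumR_ext N f g : (forall i, (i < N)%nat -> f i = g i) -> sumR N f = sumR N g.
Proof. induction N; intros H; simpl; auto. rewrite IHN, H; auto; intros; apply H; lia. Qed.
Lemma sumR_le N f g : (forall i, (i < N)%nat -> f i <= g i) -> sumR N f <= sumR N g.
Proof. induction N; intros H; simpl; [lra|]. pose proof (H N ltac:(lia)). pose proof (IHN ltac:(intros; apply H; lia)). lra. Qed.
Lemma sumR_nonneg N f : (forall i, (i < N)%nat -> 0 <= f i) -> 0 <= sumR N f.
Proof. intros H. apply Rle_trans with (sumR N (fun _ => 0)). clear H; induction N; simpl; lra. apply sumR_le; auto. Qed.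
Lemma sumR_plus N f g : sumR N (fun i => f i + g i) = sumR N f + sumR N g.
Proof. induction N; simpl; [ring|]. rewrite IHN; ring. Qed.
Lemma sumR_scal N c f : sumR N (fun i => c * f i) = c * sumR N f.
Proof. induction N; simpl; [ring|]. rewrite IHN; ring. Qed.
Lemma sumR_minus N f g : sumR N (fun i => f i - g i) = sumR N f - sumR N g.
Proof. induction N; simpl; [ring|]. rewrite IHN; ring. Qed.
Lemma sumR_const N c : sumR N (fun _ => c) = INR N * c.
Proof. induction N; simpl sumR; [simpl; ring|]. rewrite IHN, S_INR; ring. Qed.
Lemma sq_sumR N w : (sumR N w)^2 = sumR N (fun i => sumR N (fun j => w i * w j)).
Proof.
  assert (H : forall M S, sumR M (fun i => w i * S) = sumR M w * S).
  { intros M S; induction M; simpl; [ring|]; rewrite IHM; ring. }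
  transitivity (sumR N (fun i => w i * sumR N w)); [rewrite H; ring|].
  apply sumR_ext; intros i _. rewrite <- sumR_scal. reflexivity.
Qed.
Lemma sumR_single N c i : (i < N)%nat -> (forall j, (j < N)%nat -> j <> i -> c j = 0) -> sumR N c = c i.
Proof.
  induction N; intros Hi H; [lia|]. simpl.
  destruct (Nat.eq_dec N i) as [->|Hne].
  - rewrite (sumR_ext i c (fun _ => 0)). rewrite sumR_const; ring.
    intros j Hj; apply H; lia.
  - rewrite IHN; [rewrite (H N); auto; ring|lia|]. intros; apply H; auto; lia.
Qed.

Lemma I2_scal l u c h : 0 <= l -> 0 <= u -> I2 l u h -> I2 l u (fun x y => c * h x y).
Proof.
  intros Hl Hu H. destruct (E2_lin2 l u c h (fun _ _ => 0) Hl Hu H (proj1 (E2_const l u 0))) as [I _].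
  eapply I2_ext; [|exact I]. intros; simpl; ring.
Qed.

Lemma marg_sum a b k : Hpos a b k -> forall N (h : nat -> nat -> nat -> R), (N <= k)%nat ->
  (forall i, (i < N)%nat -> I2 (a i) (b i) (h i)) ->
  IntN a b k (fun X Y => sumR N (fun i => h i (X i) (Y i))) /\
  ExpN a b k (fun X Y => sumR N (fun i => h i (X i) (Y i))) = sumR N (fun i => E2 (a i) (b i) (h i)).
Proof.
  intros Hp N h HN Hh.
  destruct (sum_all a b k Hp N (fun i X Y => h i (X i) (Y i))) as [I E].
  { intros i Hi. apply (marg1 a b k Hp i (h i)); auto; lia. }
  split; auto. rewrite E. apply sumR_ext; intros i Hi. apply (marg1 a b k Hp i (h i)); auto; lia.
Qed.

Definition Vb (l u : R) := 150 * (l + u)^2 + 24 * (l - u)^2 * (l + u) + 54 * (l + u).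

Lemma Zsq_bound (l u : R) (x y : nat) :
  (Zf x y - (l - u)^2)^2 <= Gf l u (6 * (l + u)^2) 0 (24 * (l - u)^2 + 6) (24 * (l - u)^2 + 6) 48 48 x y.
Proof.
  unfold Zf, Gf. set (X := INR x). set (Y := INR y).
  set (A := X - l). set (B := Y - u).
  assert (E : (X - Y)^2 - X - Y - (l - u)^2 = ((A - B)^2 - (l + u)) + 2 * (l - u) * (A - B) - (A + B)) by (unfold A, B; ring).
  rewrite E.
  set (v := A - B). set (w := A + B). set (S := l + u). set (D := l - u).
  assert (T1 : (v^2 - S + 2 * D * v - w)^2 <= 3 * ((v^2 - S)^2 + (2 * D * v)^2 + w^2)).
  { pose proof (pow2_ge_0 (v^2 - S - 2 * D * v)). pose proof (pow2_ge_0 (v^2 - S + w)).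
    pose proof (pow2_ge_0 (2 * D * v + w)). nra. }
  assert (T2 : (v^2 - S)^2 <= 2 * v^4 + 2 * S^2) by (pose proof (pow2_ge_0 (v^2 + S)); nra).
  assert (T3 : v^4 <= 8 * A^4 + 8 * B^4).
  { unfold v. replace (A - B) with (A + - B) by ring. replace (B^4) with ((-B)^4) by ring. apply qu8. }
  assert (T4 : v^2 <= 2 * A^2 + 2 * B^2) by (unfold v; apply sq2m).
  assert (T5 : w^2 <= 2 * A^2 + 2 * B^2) by (unfold w; apply sq2).
  assert (T6 : (2 * D * v)^2 = 4 * D^2 * v^2) by ring.
  assert (T7 : 0 <= D^2) by apply pow2_ge_0.
  assert (T8 : D^2 * v^2 <= D^2 * (2 * A^2 + 2 * B^2)) by (apply Rmult_le_compat_l; auto).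
  nra.
Qed.

Section Inner.
Variables (n : nat) (m : R) (p q : nat -> R) (tX tY : nat -> nat).
Let a := fun i => m * p i.
Let b := fun i => m * q i.
Let f := fun i => fhat n m tX tY i.
Hypothesis Hp : Hpos a b n.
Hypothesis Hf : forall i, 1 <= f i.

Lemma ab_pos i : (i < n)%nat -> 0 <= a i /\ 0 <= b i.
Proof. apply Hp. Qed.

Let W i x y := (Zf x y - (a i - b i)^2) / f i.

Lemma W_I2 i : (i < n)%nat -> I2 (a i) (b i) (W i) /\ E2 (a i) (b i) (W i) = 0.
Proof.
  intros Hi. destruct (ab_pos i Hi) as [Hl Hu].
  destruct (E2_Zf _ _ Hl Hu) as [IZ EZ].
  destruct (E2_lin2 _ _ (/ f i) _ (fun _ _ => - (a i - b i)^2 / f i) Hl Hu IZ (proj1 (E2_const _ _ _))) as [I E].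
  assert (Eq : forall x y, / f i * Zf x y + - (a i - b i)^2 / f i = W i x y).
  { intros; unfold W; field. pose proof (Hf i); lra. }
  split.
  - eapply I2_ext; [exact Eq|exact I].
  - rewrite <- (E2_ext _ _ _ _ Eq), E, EZ, (proj2 (E2_const _ _ _)). field. pose proof (Hf i); lra.
Qed.

Lemma W2_I2 i : (i < n)%nat -> I2 (a i) (b i) (fun x y => W i x y * W i x y) /\
  E2 (a i) (b i) (fun x y => W i x y * W i x y) <= Vb (a i) (b i) / (f i)^2.
Proof.
  intros Hi. destruct (ab_pos i Hi) as [Hl Hu].
  set (l := a i) in *. set (u := b i) in *.
  destruct (E2_Gf l u (6 * (l + u)^2) 0 (24 * (l - u)^2 + 6) (24 * (l - u)^2 + 6) 48 48 Hl Hu) as [IG EG].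
  pose proof (I2_scal _ _ (/ (f i)^2) _ Hl Hu IG) as IG2.
  assert (Hfi : 1 <= f i) by apply Hf.
  assert (Pt : forall x y, W i x y * W i x y <= / (f i)^2 * Gf l u (6 * (l + u)^2) 0 (24 * (l - u)^2 + 6) (24 * (l - u)^2 + 6) 48 48 x y).
  { intros x y. unfold W. fold l u.
    replace ((Zf x y - (l - u) ^ 2) / f i * ((Zf x y - (l - u) ^ 2) / f i)) with (/ (f i)^2 * (Zf x y - (l - u)^2)^2) by (field; lra).
    apply Rmult_le_compat_l; [left; apply Rinv_0_lt_compat; nra|]. apply Zsq_bound. }
  assert (I : I2 l u (fun x y => W i x y * W i x y)).
  { eapply I2_dom; eauto. intros x y. rewrite Rabs_pos_eq; [apply Pt|]. apply Rle_0_sqr. }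
  split; auto.
  eapply Rle_trans; [apply (E2_mono _ _ _ _ Hl Hu I IG2 Pt)|].
  rewrite E2_scal, EG. unfold Rdiv. rewrite Rmult_comm. apply Rmult_le_compat_r.
  - left; apply Rinv_0_lt_compat; nra.
  - unfold Vb. nra.
Qed.

Lemma inner_E : condE n m p q tX tY = sumR n (fun i => (a i - b i)^2 / f i).
Proof.
  unfold condE. fold a b.
  rewrite (ExpN_ext a b n _ (fun X Y => sumR n (fun i => (fun x y => / f i * Zf x y) (X i) (Y i)))).
  2:{ intros X Y; unfold Zstat; apply sumR_ext; intros; unfold Zi, Zf, Rdiv; unfold f; ring. }
  destruct (marg_sum a b n Hp n (fun i x y => / f i * Zf x y)) as [_ E]; [lia| |].
  { intros i Hi. destruct (ab_pos i Hi). apply I2_scal; auto. apply E2_Zf; auto. }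
  rewrite E. apply sumR_ext; intros i Hi. destruct (ab_pos i Hi).
  rewrite E2_scal, (proj2 (E2_Zf _ _ H H0)). unfold Rdiv; ring.
Qed.

Lemma inner_V : condVar n m p q tX tY <= sumR n (fun i => Vb (a i) (b i) / (f i)^2).
Proof.
  unfold condVar. rewrite inner_E. fold a b.
  rewrite (ExpN_ext a b n _ (fun X Y => sumR n (fun i => sumR n (fun j => W i (X i) (Y i) * W j (X j) (Y j))))).
  2:{ intros X Y. rewrite <- sq_sumR. f_equal. unfold Zstat. rewrite <- sumR_minus.
      apply sumR_ext; intros i Hi. unfold W, Zi, Zf, f. field. pose proof (Hf i) as HH; unfold f in HH; lra. }
  assert (Hij : forall i j, (i < n)%nat -> (j < n)%nat ->
    IntN a b n (fun X Y => W i (X i) (Y i) * W j (X j) (Y j)) /\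
    ExpN a b n (fun X Y => W i (X i) (Y i) * W j (X j) (Y j)) = if Nat.eq_dec i j then E2 (a i) (b i) (fun x y => W i x y * W i x y) else 0).
  { intros i j Hi Hj. destruct (Nat.eq_dec i j) as [<-|Hne].
    - apply (marg1 a b n Hp i (fun x y => W i x y * W i x y) Hi). apply W2_I2; auto.
    - destruct (marg2 a b n Hp i j (W i) (W j) Hi Hj Hne (proj1 (W_I2 i Hi)) (proj1 (W_I2 j Hj))) as [I E].
      split; auto. rewrite E, (proj2 (W_I2 i Hi)); ring. }
  destruct (sum_all a b n Hp n (fun i X Y => sumR n (fun j => W i (X i) (Y i) * W j (X j) (Y j)))) as [_ E].
  { intros i Hi. apply (sum_all a b n Hp n (fun j X Y => W i (X i) (Y i) * W j (X j) (Y j))).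
    intros j Hj; apply Hij; auto. }
  rewrite E. apply sumR_le; intros i Hi.
  destruct (sum_all a b n Hp n (fun j X Y => W i (X i) (Y i) * W j (X j) (Y j))) as [_ E'].
  { intros j Hj; apply Hij; auto. }
  rewrite E'. rewrite (sumR_single n _ i Hi).
  - rewrite (proj2 (Hij i i Hi Hi)). destruct (Nat.eq_dec i i); [|lia]. apply W2_I2; auto.
  - intros j Hj Hne. rewrite (proj2 (Hij i j Hi Hj)). destruct (Nat.eq_dec i j); [lia|auto].
Qed.

End Inner.

Lemma Gf_Gr l u al ka be ga de ep x y : Gf l u al ka be ga de ep x y = Gr l u al ka be ga de ep (INR x) (INR y).
Proof. reflexivity. Qed.

Lemma Gf_nonneg l u al ka be ga de ep x y : 0 <= al -> 0 <= ka -> 0 <= be -> 0 <= ga -> 0 <= de -> 0 <= ep ->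
  0 <= Gf l u al ka be ga de ep x y.
Proof.
  intros. unfold Gf. pose proof (pos_INR x). pose proof (pos_INR y).
  pose proof (pow2_ge_0 (INR x - l)). pose proof (pow2_ge_0 (INR y - u)).
  assert (0 <= (INR x - l)^4) by (replace ((INR x - l)^4) with (((INR x - l)^2)^2) by ring; apply pow2_ge_0).
  assert (0 <= (INR y - u)^4) by (replace ((INR y - u)^4) with (((INR y - u)^2)^2) by ring; apply pow2_ge_0).
  repeat apply Rplus_le_le_0_compat; try apply Rmult_le_pos; lra.
Qed.

Lemma div_le_inv a b c : 0 < c -> a / c <= b -> a <= b * c.
Proof. intros Hc H. replace a with ((a / c) * c) by (field; lra). apply Rmult_le_compat_r; lra. Qed.

Section Outer.
Variables (n : nat) (m : R) (p q : nat -> R).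
Hypotheses (Hn : (1 <= n)%nat) (Hm : INR n <= m) (Hpd : is_distr n p) (Hqd : is_distr n q).

Let a := fun i => m * p i.
Let b := fun i => m * q i.
Let r := sqrt (m / INR n).

Lemma nR : 0 < INR n.
Proof. apply lt_0_INR; lia. Qed.
Lemma mpos : 0 < m.
Proof. pose proof nR; lra. Qed.
Lemma rpos : 0 < r.
Proof. unfold r; apply sqrt_lt_R0. pose proof nR; pose proof mpos; apply Rdiv_lt_0_compat; lra. Qed.
Lemma r2 : r^2 = m / INR n.
Proof. unfold r; apply pow2_sqrt. pose proof nR; pose proof mpos; left; apply Rdiv_lt_0_compat; lra. Qed.
Lemma r2ge1 : 1 <= r^2.
Proof. rewrite r2. pose proof nR. apply le_div_r; lra. Qed.
Lemma nr2 : INR n * r^2 = m.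
Proof. rewrite r2. pose proof nR. field. lra. Qed.

Lemma Hpab : Hpos a b n.
Proof.
  intros i Hi. destruct Hpd as [P _]. destruct Hqd as [Q _]. pose proof mpos.
  unfold a, b; split; apply Rmult_le_pos; try lra; auto.
Qed.

Lemma fhat_facts tX tY i :
  let f := fhat n m tX tY i in let x := INR (tX i) in let y := INR (tY i) in
  1 <= f /\ Rabs (x - y) <= r * f /\ x + y <= r^2 * f /\ f <= 1 + Rabs (x - y) / r + (x + y) / r^2.
Proof.
  intros f x y. pose proof rpos as Hr. pose proof r2ge1.
  assert (Hf : f = Rmax (Rmax (Rabs (x - y) / r) ((x + y) / r^2)) 1).
  { unfold f, fhat. destruct (Rle_dec (INR n) m); [|lra]. fold r. rewrite r2. reflexivity. }
  assert (H1 : Rabs (x - y) / r <= f) by (rewrite Hf; eapply Rle_trans; [apply Rmax_l|apply Rmax_l]).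
  assert (H2 : (x + y) / r^2 <= f) by (rewrite Hf; eapply Rle_trans; [apply Rmax_r|apply Rmax_l]).
  assert (H3 : 1 <= f) by (rewrite Hf; apply Rmax_r).
  assert (P1 : 0 <= Rabs (x - y) / r) by (apply div_nonneg; [apply Rabs_pos|lra]).
  assert (P2 : 0 <= (x + y) / r^2) by (apply div_nonneg; [pose proof (pos_INR (tX i)); pose proof (pos_INR (tY i)); unfold x, y; lra|lra]).
  split; [|split; [|split]]; auto.
  - apply div_le_inv in H1; [lra|lra].
  - apply div_le_inv in H2; [lra|lra].
  - rewrite Hf. repeat apply Rmax_lub; lra.
Qed.


Definition Dl i := a i - b i.
Definition Sg i := a i + b i.

Definition FA i := Gf (a i) (b i) (3/2 + Rabs (Dl i) / r) (/ r^2) (/ r^2) (/ r^2) 0 0.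
Definition FB i :=
  if Rle_dec (Rabs (Dl i)) r then Gf (a i) (b i) (Dl i ^ 2) 0 0 0 0 0
  else if Rle_dec (r * Rabs (Dl i)) (Sg i) then
    Gf (a i) (b i) (2 * r^2 * (Dl i)^2 / Sg i) 0 0 0 (128 / (Sg i)^2) (128 / (Sg i)^2)
  else Gf (a i) (b i) (2 * r * Rabs (Dl i)) 0 8 8 0 0.
Definition FC i :=
  if Rlt_dec 0 (Sg i) then
    Gf (a i) (b i) (54 * Sg i + 600 * r^4 + 96 * Sg i * r^2) 0 (1200 + 768 * r^4 / Sg i) (1200 + 768 * r^4 / Sg i)
      (3072 / Sg i) (3072 / Sg i)
  else Gf (a i) (b i) 0 0 0 0 0 0.

Lemma Dl_le_Sg i : (i < n)%nat -> Rabs (Dl i) <= Sg i.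
Proof. intros Hi; destruct (Hpab i Hi). unfold Dl, Sg. apply Rabs_le; lra. Qed.

Lemma FA_ok i : (i < n)%nat -> I2 (a i) (b i) (FA i) /\ E2 (a i) (b i) (FA i) = 3/2 + Rabs (Dl i) / r + 2 * Sg i / r^2
  /\ forall x y, 0 <= FA i x y.
Proof.
  intros Hi; destruct (Hpab i Hi) as [Hl Hu]. pose proof rpos.
  assert (0 < r^2) by (apply pow_lt; lra).
  assert (0 <= / r^2) by (left; apply Rinv_0_lt_compat; lra).
  destruct (E2_Gf (a i) (b i) (3/2 + Rabs (Dl i) / r) (/ r^2) (/ r^2) (/ r^2) 0 0 Hl Hu) as [I E].
  split; [exact I|split].
  - unfold FA; rewrite E. unfold Sg, Rdiv. ring.
  - intros; apply Gf_nonneg; try lra. pose proof (div_nonneg (Rabs (Dl i)) r (Rabs_pos _) ltac:(lra)); lra.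
Qed.

Lemma FB_ok i : (i < n)%nat -> I2 (a i) (b i) (FB i) /\ E2 (a i) (b i) (FB i) <= 514 * r * Rabs (Dl i)
  /\ forall x y, 0 <= FB i x y.
Proof.
  intros Hi; destruct (Hpab i Hi) as [Hl Hu]. pose proof rpos. pose proof r2ge1.
  pose proof (Dl_le_Sg i Hi) as HDS. pose proof (Rabs_pos (Dl i)) as HDa.
  assert (HDD : Dl i ^ 2 = Rabs (Dl i) ^ 2) by (rewrite <- pow2_abs; auto).
  unfold FB. destruct (Rle_dec (Rabs (Dl i)) r) as [Ha|Ha].
  - destruct (E2_Gf (a i) (b i) (Dl i ^ 2) 0 0 0 0 0 Hl Hu) as [I E].
    split; [exact I|split].
    + rewrite E. rewrite HDD. nra.
    + intros; apply Gf_nonneg; try lra. apply pow2_ge_0.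
  - destruct (Rle_dec (r * Rabs (Dl i)) (Sg i)) as [Hb|Hb].
    + assert (HS : 0 < Sg i) by nra.
      assert (HS2 : 0 < Sg i ^ 2) by (apply pow_lt; lra).
      destruct (E2_Gf (a i) (b i) (2 * r^2 * (Dl i)^2 / Sg i) 0 0 0 (128 / (Sg i)^2) (128 / (Sg i)^2) Hl Hu) as [I E].
      split; [exact I|split].
      * rewrite E.
        assert (K1 : 2 * r^2 * (Dl i)^2 / Sg i <= 2 * r * Rabs (Dl i)).
        { apply div_le_l; auto. rewrite HDD.
          assert (0 <= r * Rabs (Dl i)) by (apply Rmult_le_pos; lra).
          replace (2 * r ^ 2 * Rabs (Dl i) ^ 2) with (2 * (r * Rabs (Dl i)) * (r * Rabs (Dl i))) by ring.
          replace (2 * r * Rabs (Dl i) * Sg i) with (2 * (r * Rabs (Dl i)) * Sg i) by ring.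
          apply Rmult_le_compat_l; lra. }
        assert (K2 : 128 / Sg i ^ 2 * (a i + 3 * a i ^ 2) + 128 / Sg i ^ 2 * (b i + 3 * b i ^ 2) <= 128 / Sg i + 384).
        { replace (128 / Sg i ^ 2 * (a i + 3 * a i ^ 2) + 128 / Sg i ^ 2 * (b i + 3 * b i ^ 2)) with
            ((128 * Sg i + 384 * (a i ^ 2 + b i ^ 2)) / Sg i ^ 2) by (unfold Sg; field; unfold Sg in HS; lra).
          apply div_le_l; auto. replace ((128 / Sg i + 384) * Sg i ^ 2) with (128 * Sg i + 384 * Sg i ^ 2) by (field; lra).
          unfold Sg. nra. }
        assert (K4 : 1 <= r * Rabs (Dl i)).
        { assert (r * r <= r * Rabs (Dl i)) by (apply Rmult_le_compat_l; lra). simpl in *; lra. }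
        assert (K3 : 128 / Sg i <= 128 * (r * Rabs (Dl i))).
        { apply div_le_l; auto. assert (1 * 1 <= r * Rabs (Dl i) * Sg i) by (apply Rmult_le_compat; lra). lra. }
        lra.
      * intros; apply Gf_nonneg; try lra; apply div_nonneg; try lra. nra.
    + destruct (E2_Gf (a i) (b i) (2 * r * Rabs (Dl i)) 0 8 8 0 0 Hl Hu) as [I E].
      split; [exact I|split].
      * rewrite E. unfold Sg in Hb. nra.
      * intros; apply Gf_nonneg; try lra; apply div_nonneg; try lra; nra.
Qed.

Lemma FC_ok i : (i < n)%nat -> I2 (a i) (b i) (FC i) /\
  E2 (a i) (b i) (FC i) <= 10470 * Sg i + 1368 * r^4 + 96 * Sg i * r^2 + 3072
  /\ forall x y, 0 <= FC i x y.
Proof.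
  intros Hi; destruct (Hpab i Hi) as [Hl Hu]. pose proof rpos. pose proof r2ge1.
  assert (Hr4 : 0 < r^4) by (apply pow_lt; lra).
  assert (0 <= Sg i) by (unfold Sg; lra).
  unfold FC. destruct (Rlt_dec 0 (Sg i)) as [HS|HS].
  - destruct (E2_Gf (a i) (b i) (54 * Sg i + 600 * r^4 + 96 * Sg i * r^2) 0 (1200 + 768 * r^4 / Sg i) (1200 + 768 * r^4 / Sg i)
      (3072 / Sg i) (3072 / Sg i) Hl Hu) as [I E].
    split; [exact I|split].
    + rewrite E.
      replace (54 * Sg i + 600 * r ^ 4 + 96 * Sg i * r ^ 2 + 0 * (a i + b i) + (1200 + 768 * r ^ 4 / Sg i) * a i +
        (1200 + 768 * r ^ 4 / Sg i) * b i + 3072 / Sg i * (a i + 3 * a i ^ 2) + 3072 / Sg i * (b i + 3 * b i ^ 2))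
        with (1254 * Sg i + 1368 * r^4 + 96 * Sg i * r^2 + 3072 + 9216 * (a i ^ 2 + b i ^ 2) / Sg i)
        by (unfold Sg in *; field; lra).
      assert (9216 * (a i ^ 2 + b i ^ 2) / Sg i <= 9216 * Sg i).
      { apply div_le_l; auto. unfold Sg. nra. }
      lra.
    + intros; apply Gf_nonneg; try lra; try (apply div_nonneg; lra).
      * nra.
      * pose proof (div_nonneg (768 * r^4) (Sg i) ltac:(lra) ltac:(lra)); lra.
      * pose proof (div_nonneg (768 * r^4) (Sg i) ltac:(lra) ltac:(lra)); lra.
  - destruct (E2_Gf (a i) (b i) 0 0 0 0 0 0 Hl Hu) as [I E].
    split; [exact I|split].
    + rewrite E. nra.
    + intros; apply Gf_nonneg; lra.
Qed.

Lemma FA_pt tX tY i : (i < n)%nat -> fhat n m tX tY i <= FA i (tX i) (tY i).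
Proof.
  intros Hi. destruct (fhat_facts tX tY i) as [F1 [F2 [F3 F4]]]. destruct (Hpab i Hi).
  unfold FA; rewrite Gf_Gr. apply ptA; auto using pos_INR, rpos.
Qed.

Lemma FB_pt tX tY i : (i < n)%nat -> (Dl i)^2 / fhat n m tX tY i <= FB i (tX i) (tY i).
Proof.
  intros Hi. destruct (fhat_facts tX tY i) as [F1 [F2 [F3 F4]]]. destruct (Hpab i Hi).
  pose proof rpos.
  unfold FB, Dl, Sg; destruct (Rle_dec _ _); [|destruct (Rle_dec _ _)]; rewrite Gf_Gr.
  - apply ptBa; auto using pos_INR, rpos.
  - apply ptBb1; auto using pos_INR, rpos; lra.
  - apply ptBb2; auto using pos_INR, rpos; lra.
Qed.

Lemma FC_pt tX tY i : (i < n)%nat -> Vb (a i) (b i) / (fhat n m tX tY i)^2 <= FC i (tX i) (tY i).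
Proof.
  intros Hi. destruct (fhat_facts tX tY i) as [F1 [F2 [F3 F4]]]. destruct (Hpab i Hi).
  pose proof rpos.
  unfold FC, Sg; destruct (Rlt_dec _ _); rewrite Gf_Gr.
  - apply ptC; auto using pos_INR, rpos.
  - assert (Ea : a i = 0) by lra. assert (Eb : b i = 0) by lra. unfold Vb, Gr. rewrite Ea, Eb.
    replace ((150 * (0 + 0) ^ 2 + 24 * (0 - 0) ^ 2 * (0 + 0) + 54 * (0 + 0)) / fhat n m tX tY i ^ 2) with 0 by (unfold Rdiv; ring).
    ring_simplify. lra.
Qed.


Definition dd := l1dist n p q.
Definition TA := 30 * (11/2 * INR n + m * dd / r).
Definition TB := 15420 * (m * dd * r).
Definition TC := 767160 * (m * r^2).

Lemma sumR_zero N g : (forall i, (i < N)%nat -> 0 <= g i) -> sumR N g = 0 -> forall i, (i < N)%nat -> g i = 0.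
Proof.
  induction N; intros Hg Hs i Hi; [lia|]. simpl in Hs.
  assert (0 <= sumR N g) by (apply sumR_nonneg; intros; apply Hg; lia).
  pose proof (Hg N ltac:(lia)).
  destruct (Nat.eq_dec i N) as [->|Hne]; [lra|].
  apply IHN; [intros; apply Hg; lia|lra|lia].
Qed.

Lemma dd_nonneg : 0 <= dd.
Proof. unfold dd, l1dist. apply sumR_nonneg; intros; apply Rabs_pos. Qed.

Lemma sum_absD : sumR n (fun i => Rabs (Dl i)) = m * dd.
Proof.
  unfold dd, l1dist. rewrite <- sumR_scal. apply sumR_ext; intros i _.
  unfold Dl, a, b. replace (m * p i - m * q i) with (m * (p i - q i)) by ring.
  rewrite Rabs_mult, Rabs_pos_eq; auto. pose proof mpos; lra.
Qed.

Lemma sum_Sg : sumR n Sg = 2 * m.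
Proof.
  unfold Sg, a, b. rewrite sumR_plus, !sumR_scal. destruct Hpd as [_ P]. destruct Hqd as [_ Q].
  rewrite P, Q; ring.
Qed.

Lemma key_r : m * sqrt m * dd / sqrt (INR n) = m * dd * r.
Proof.
  unfold r. rewrite sqrt_div_alt by apply nR. pose proof nR.
  assert (0 < sqrt (INR n)) by (apply sqrt_lt_R0; auto). field. lra.
Qed.

Lemma key_r2 : m ^ 2 / INR n = m * r^2.
Proof. rewrite r2. pose proof nR. field. lra. Qed.

Lemma CA tX tY : sumR n (fun i => FA i (tX i) (tY i)) < TA ->
  1/330 * Rmin (m * sqrt m * dd / sqrt (INR n)) (m ^ 2 * dd ^ 2 / INR n) <= condE n m p q tX tY.
Proof.
  intros HS. rewrite key_r. rewrite inner_E.
  2:{ apply Hpab. }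
  set (K := m * dd). pose proof dd_nonneg. pose proof mpos. pose proof rpos. pose proof nR.
  assert (HK : 0 <= K) by (unfold K; nra).
  replace (m ^ 2 * dd ^ 2 / INR n) with (K^2 / INR n) by (unfold K; field; lra).
  set (f := fun i => fhat n m tX tY i).
  assert (Hf : forall i, 1 <= f i) by (intros; apply (fhat_facts tX tY i)).
  assert (HSf : sumR n f < TA).
  { eapply Rle_lt_trans; [|exact HS]. apply sumR_le; intros; apply FA_pt; auto. }
  assert (HTA : 0 < TA) by (unfold TA; assert (0 <= m * dd / r) by (apply div_nonneg; nra); nra).
  set (lam := K / TA).
  assert (Hlam : 0 <= lam) by (apply div_nonneg; lra).
  assert (Pt : forall i, (i < n)%nat -> 2 * lam * Rabs (Dl i) - lam^2 * f i <= (m * p i - m * q i)^2 / f i).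
  { intros i Hi. pose proof (Hf i). apply le_div_r; [lra|].
    replace ((m * p i - m * q i)^2) with (Rabs (Dl i) ^ 2) by (unfold Dl, a, b; rewrite pow2_abs; auto).
    pose proof (pow2_ge_0 (Rabs (Dl i) - lam * f i)). nra. }
  assert (LB : 2 * lam * K - lam^2 * sumR n f <= sumR n (fun i => (m * p i - m * q i)^2 / f i)).
  { eapply Rle_trans; [|apply sumR_le; exact Pt].
    rewrite sumR_minus, sumR_scal, sumR_scal, sum_absD. fold K. lra. }
  assert (LB2 : K^2 / TA <= sumR n (fun i => (m * p i - m * q i)^2 / f i)).
  { eapply Rle_trans; [|exact LB]. unfold lam.
    assert (K^2 / TA = 2 * (K / TA) * K - (K / TA)^2 * TA) by (field; lra).
    assert ((K / TA)^2 * sumR n f <= (K / TA)^2 * TA) by (apply Rmult_le_compat_l; [apply pow2_ge_0|lra]).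
    lra. }
  fold f. eapply Rle_trans; [|exact LB2].
  destruct (Req_dec K 0) as [K0|K0].
  - rewrite K0. unfold Rmin; destruct (Rle_dec _ _); unfold Rdiv; ring_simplify; lra.
  - assert (HKp : 0 < K) by lra.
    destruct (Rle_or_lt (30 * K / r) (165 * INR n)) as [C|C].
    + assert (TA <= 330 * INR n) by (unfold TA; fold K; unfold Rdiv in *; lra).
      apply Rle_trans with (1/330 * (K^2 / INR n)); [apply Rmult_le_compat_l; [lra|apply Rmin_r]|].
      apply le_div_r; [lra|].
      replace (1 / 330 * (K ^ 2 / INR n) * TA) with (K^2 * (TA / (330 * INR n))) by (field; lra).
      assert (TA / (330 * INR n) <= 1) by (apply div_le_l; lra).
      assert (0 <= K^2) by apply pow2_ge_0. nra.
    + assert (HT : TA <= 60 * K / r) by (unfold TA; fold K; unfold Rdiv in *; lra).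
      apply Rle_trans with (1/330 * (K * r)); [apply Rmult_le_compat_l; [lra|apply Rmin_l]|].
      apply le_div_r; [lra|].
      assert (HT2 : TA * r <= 60 * K) by (replace (60*K) with ((60*K/r)*r) by (field; lra); apply Rmult_le_compat_r; lra).
      assert (K * (TA * r) <= K * (60 * K)) by (apply Rmult_le_compat_l; lra).
      nra.
Qed.


Lemma TB_nonneg : 0 <= TB.
Proof. unfold TB. pose proof dd_nonneg. pose proof mpos. pose proof rpos.
  assert (0 <= m * dd) by nra. assert (0 <= m * dd * r) by nra. lra. Qed.
Lemma TA_pos : 0 < TA.
Proof. unfold TA. pose proof dd_nonneg. pose proof mpos. pose proof rpos. pose proof nR.
  assert (0 <= m * dd / r) by (apply div_nonneg; nra). lra. Qed.
Lemma TC_pos : 0 < TC.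
Proof. unfold TC. pose proof mpos. pose proof r2ge1. nra. Qed.

Lemma inv_nonneg x : 0 <= x -> 0 <= / x.
Proof. intros [H|H]; [left; apply Rinv_0_lt_compat; auto|rewrite <- H, Rinv_0; lra]. Qed.

Lemma CB tX tY : ~ condE n m p q tX tY <= 15420 * (m * sqrt m * dd / sqrt (INR n)) ->
  1 <= / TB * sumR n (fun i => FB i (tX i) (tY i)).
Proof.
  intros HE. rewrite key_r in HE. rewrite inner_E in HE by apply Hpab.
  assert (LE : sumR n (fun i => (m * p i - m * q i)^2 / fhat n m tX tY i) <= sumR n (fun i => FB i (tX i) (tY i))).
  { apply sumR_le; intros i Hi. apply (FB_pt tX tY i Hi). }
  destruct TB_nonneg as [HT|HT].
  - rewrite Rmult_comm. apply le_div_r; auto. unfold TB in HT |- *. lra.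
  - exfalso. apply HE. pose proof mpos. pose proof rpos.
    assert (Hd : dd = 0).
    { unfold TB in HT. assert (m * dd * r = 0) by lra.
      apply Rmult_integral in H1; destruct H1 as [H1|H1]; [|lra].
      apply Rmult_integral in H1; destruct H1; lra. }
    assert (Z : forall i, (i < n)%nat -> Rabs (p i - q i) = 0).
    { apply sumR_zero; [intros; apply Rabs_pos|]. exact Hd. }
    rewrite (sumR_ext n _ (fun _ => 0)).
    + rewrite sumR_const, Hd. lra.
    + intros i Hi. pose proof (Z i Hi). assert (p i = q i).
      { destruct (Rcase_abs (p i - q i)); [rewrite Rabs_left in H1|rewrite Rabs_right in H1]; lra. }
      rewrite H2. unfold Rdiv. ring.
Qed.

Lemma CC tX tY : ~ condVar n m p q tX tY <= 767160 * (m ^ 2 / INR n) ->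
  1 <= / TC * sumR n (fun i => FC i (tX i) (tY i)).
Proof.
  intros HV. rewrite key_r2 in HV.
  assert (LE : condVar n m p q tX tY <= sumR n (fun i => FC i (tX i) (tY i))).
  { eapply Rle_trans; [apply inner_V; [apply Hpab|intros; apply (fhat_facts tX tY i)]|].
    apply sumR_le; intros i Hi. apply (FC_pt tX tY i Hi). }
  pose proof TC_pos. rewrite Rmult_comm. apply le_div_r; auto. unfold TC in *. lra.
Qed.

Definition Low (tX tY : nat -> nat) : R :=
  1 + (- / TA) * sumR n (fun i => FA i (tX i) (tY i)) +
  ((- / TB) * sumR n (fun i => FB i (tX i) (tY i)) + (- / TC) * sumR n (fun i => FC i (tX i) (tY i))).

Lemma good_lb tX tY : Low tX tY <= good_ind (1/330) 15420 767160 n m p q tX tY.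
Proof.
  unfold Low.
  assert (SA : 0 <= sumR n (fun i => FA i (tX i) (tY i))) by (apply sumR_nonneg; intros; apply FA_ok; auto).
  assert (SB : 0 <= sumR n (fun i => FB i (tX i) (tY i))) by (apply sumR_nonneg; intros; apply FB_ok; auto).
  assert (SC : 0 <= sumR n (fun i => FC i (tX i) (tY i))) by (apply sumR_nonneg; intros; apply FC_ok; auto).
  pose proof TA_pos. pose proof TC_pos. pose proof TB_nonneg.
  assert (IA : 0 <= / TA * sumR n (fun i => FA i (tX i) (tY i))) by (apply Rmult_le_pos; [apply inv_nonneg; lra|auto]).
  assert (IB : 0 <= / TB * sumR n (fun i => FB i (tX i) (tY i))) by (apply Rmult_le_pos; [apply inv_nonneg; lra|auto]).
  assert (IC : 0 <= / TC * sumR n (fun i => FC i (tX i) (tY i))) by (apply Rmult_le_pos; [apply inv_nonneg; lra|auto]).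
  unfold good_ind. cbv zeta. change (l1dist n p q) with dd.
  destruct (Rle_dec _ _) as [A|A]; [destruct (Rle_dec _ _) as [B|B]; [destruct (Rle_dec _ _) as [C|C]|]|].
  - lra.
  - pose proof (CC tX tY C). lra.
  - pose proof (CB tX tY B). lra.
  - destruct (Rlt_or_le (sumR n (fun i => FA i (tX i) (tY i))) TA) as [L|L].
    + exfalso; apply A. apply CA; auto.
    + assert (1 <= / TA * sumR n (fun i => FA i (tX i) (tY i))).
      { rewrite Rmult_comm. apply le_div_r; lra. }
      lra.
Qed.

Lemma main_bound : ExpN a b n (fun tX tY => good_ind (1/330) 15420 767160 n m p q tX tY) >= 9 / 10.
Proof.
  pose proof Hpab as Hp.
  destruct (marg_sum a b n Hp n FA (le_n n)) as [IA EA]; [intros; apply FA_ok; auto|].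
  destruct (marg_sum a b n Hp n FB (le_n n)) as [IB EB]; [intros; apply FB_ok; auto|].
  destruct (marg_sum a b n Hp n FC (le_n n)) as [IC EC]; [intros; apply FC_ok; auto|].
  pose proof (Int_scal a b n (- / TA) _ IA) as IA'.
  pose proof (Int_scal a b n (- / TB) _ IB) as IB'.
  pose proof (Int_scal a b n (- / TC) _ IC) as IC'.
  destruct (add_all a b n Hp _ _ IB' IC') as [IBC EBC].
  destruct (add_all a b n Hp _ _ (Int_const a b n 1) IA') as [I1A E1A].
  destruct (add_all a b n Hp _ _ I1A IBC) as [IL EL].
  assert (Ig : IntN a b n (fun tX tY => good_ind (1/330) 15420 767160 n m p q tX tY)).
  { apply (Int_dom a b n Hp _ (fun _ _ => 1) (Int_const a b n 1)). intros X Y.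
    unfold good_ind; cbv zeta. repeat destruct (Rle_dec _ _); rewrite ?Rabs_R1, ?Rabs_R0; lra. }
  assert (M : ExpN a b n Low <= ExpN a b n (fun tX tY => good_ind (1/330) 15420 767160 n m p q tX tY)).
  { apply (mono_all a b n Hp); auto. apply good_lb. }
  unfold Low in M. rewrite EL, E1A, EBC, !ExpN_scal, ExpN_const, EA, EB, EC in M.
  pose proof TA_pos as HTA. pose proof TC_pos as HTC. pose proof TB_nonneg as HTB.
  pose proof mpos. pose proof rpos. pose proof r2ge1. pose proof nR. pose proof dd_nonneg. pose proof nr2 as Hnr2.
  assert (Aff : forall N c0 c1 c2 g h, sumR N (fun i => c0 + c1 * g i + c2 * h i) = c0 * INR N + c1 * sumR N g + c2 * sumR N h).
  { intros. rewrite !sumR_plus, !sumR_scal, sumR_const. ring. }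
  assert (VA : / TA * sumR n (fun i => E2 (a i) (b i) (FA i)) = 1/30).
  { rewrite (sumR_ext n _ (fun i => 3/2 + / r * Rabs (Dl i) + (2 / r^2) * Sg i)).
    2:{ intros i Hi; rewrite (proj1 (proj2 (FA_ok i Hi))). unfold Rdiv; ring. }
    rewrite Aff, sum_absD, sum_Sg. unfold TA.
    replace (2 / r ^ 2 * (2 * m)) with (4 * INR n) by (rewrite <- Hnr2; field; lra).
    field. split; [lra|]. assert (0 <= m * dd / r) by (apply div_nonneg; nra). unfold Rdiv in *. nra. }
  assert (VB : / TB * sumR n (fun i => E2 (a i) (b i) (FB i)) <= 1/30).
  { assert (S : sumR n (fun i => E2 (a i) (b i) (FB i)) <= 514 * r * (m * dd)).
    { rewrite <- sum_absD, <- sumR_scal. apply sumR_le; intros i Hi.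
      replace (514 * r * Rabs (Dl i)) with (514 * r * Rabs (Dl i)) by ring. apply FB_ok; auto. }
    destruct HTB as [HT|HT].
    - apply Rle_trans with (/ TB * (514 * r * (m * dd))).
      + apply Rmult_le_compat_l; [left; apply Rinv_0_lt_compat; auto|auto].
      + unfold TB in *. right. field. nra.
    - rewrite <- HT, Rinv_0. lra. }
  assert (VC : / TC * sumR n (fun i => E2 (a i) (b i) (FC i)) <= 1/30).
  { assert (S : sumR n (fun i => E2 (a i) (b i) (FC i)) <= sumR n (fun i => (1368 * r^4 + 3072) + (10470 + 96 * r^2) * Sg i + 0 * Sg i)).
    { apply sumR_le; intros i Hi. pose proof (proj1 (proj2 (FC_ok i Hi))). nra. }
    rewrite Aff, sum_Sg in S.
    assert (K : sumR n (fun i => E2 (a i) (b i) (FC i)) <= 25572 * (m * r^2)).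
    { eapply Rle_trans; [exact S|].
      assert (INR n * r^4 = m * r^2) by (rewrite <- Hnr2; ring).
      assert (INR n <= m * r^2) by nra.
      assert (m <= m * r^2) by nra.
      nra. }
    apply Rle_trans with (/ TC * (25572 * (m * r^2))).
    + apply Rmult_le_compat_l; [left; apply Rinv_0_lt_compat; auto|auto].
    + unfold TC in *. right. field. nra. }
  lra.
Qed.
End Outer.


Theorem lemma2p3 :
  exists c1 c2 c3 : R, 0 < c1 /\ 0 < c2 /\ 0 < c3 /\
  forall (n : nat) (m : R) (p q : nat -> R),
    (1 <= n)%nat -> INR n <= m -> is_distr n p -> is_distr n q ->
    ExpN (fun i => m * p i) (fun i => m * q i) n
      (fun tX tY => good_ind c1 c2 c3 n m p q tX tY) >= 9 / 10.
Proof.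
  exists (1/330), 15420, 767160. split; [lra|split; [lra|split; [lra|]]].
  intros n m p q Hn Hm Hp Hq. apply main_bound; auto.
Qed.
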